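(* Let $l\ge1$ and $n\ge4l+2$ with $(2l+1)\mid n$. Then every midpoint crossing of $P_n$ is a global minimum of $s_{2l+1}$, every vertex crossing is a global maximum of $s_{2l+1}$, in counterclockwise order around $P_n$ the crossings alternate between vertex crossings and midpoint crossings, and $s_{2l+1}$ is strictly monotonic between adjacent midpoint and vertex crossings.
   Context: $P_n$ is the boundary of the regular polygon in $\mathbb{R}^2$ with vertices the $n$-th roots of unity, Euclidean metric $\|x-y\|$. $d_{P_n}(x,y)\in[0,1)$ is the counterclockwise arc length of $P_n$ from $x$ to $y$ divided by the perimeter. The directed Vietoris–Rips graph $\mathrm{VR}_<(P_n;r)$ has vertex set $P_n$ and, for distinct $u,w$ with $\|u-w\|<r$, the edge $u\to w$ if $d_{P_n}(u,w)<d_{P_n}(w,u)$, else $w\to u$; it is cyclic if whenever $u_0\to u_1$, every $w$ strictly counterclockwise-between them has $u_0\to w$ and $w\to u_1$. $r_n=\sup\{r\ge0:\mathrm{VR}_<(P_n;r')\text{ cyclic for all }0<r'<r\}$. For $0<r<r_n$, $g_r(p)$ is the first point $w$ met moving counterclockwise from $p$ with $\|p-w\|=r$, and $g_{r_n}=\lim_{r\to r_n}g_r$. An equilateral $(2l+1)$-pointed star of side $r\in(0,r_n]$ inscribed in $P_n$ is a cyclic sequence $u_0,\dots,u_{2l}$ with $u_{i+1}=g_r(u_i)$ (indices mod $2l+1$) and $\sum_i d_{P_n}(u_i,u_{i+1})=l$. For $n\ge4l+2$ each $p\in P_n$ lies on exactly one such star, and $s_{2l+1}(p)$ denotes its side length.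 $p$ is a vertex crossing (resp. midpoint crossing) if that star contains a vertex of $P_n$ (resp. the midpoint of an edge of $P_n$). *)

(* Defs.v *)
From Stdlib Require Import Reals Lra ClassicalEpsilon.
From Coquelicot Require Import Coquelicot.
Open Scope R_scope.

(* Points of P_n are represented by their normalized counterclockwise
   arc-length parameter t in [0,1): t = (arc length from the vertex 1 to the
   point) / perimeter.  The map t |-> pt n t is a bijection [0,1) -> P_n. *)
Definition inP (t : R) : Prop := 0 <= t < 1.

Definition vert (n : nat) (k : Z) : R * R :=
  (cos (2 * PI * IZR k / INR n), sin (2 * PI * IZR k / INR n)).

Definition pt (n : nat) (t : R) : R * R :=
  let u := INR n * t in
  let k := Int_part u in
  let f := frac_part u in
  ((1 - f) * fst (vert n k) + f * fst (vert n (k + 1)),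
   (1 - f) * snd (vert n k) + f * snd (vert n (k + 1))).

Definition edist (a b : R * R) : R :=
  sqrt ((fst a - fst b) ^ 2 + (snd a - snd b) ^ 2).

(* d_{P_n}(x,y): counterclockwise arc length from x to y over the perimeter *)
Definition dP (s t : R) : R := frac_part (t - s).

(* directed edge u -> w of VR_<(P_n; r) *)
Definition arrow (n : nat) (r u w : R) : Prop :=
  u <> w /\ edist (pt n u) (pt n w) < r /\ dP u w <= dP w u.

Definition cyclicVR (n : nat) (r : R) : Prop :=
  forall u0 u1, inP u0 -> inP u1 -> arrow n r u0 u1 ->
  forall w, inP w -> 0 < dP u0 w < dP u0 u1 ->
    arrow n r u0 w /\ arrow n r w u1.

Definition rn (n : nat) : R :=
  real (Lub_Rbar (fun r => 0 <= r /\ forall r', 0 < r' < r -> cyclicVR n r')).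

Definition off0 (n : nat) (r p : R) : R :=
  real (Glb_Rbar (fun t => 0 < t < 1 /\ edist (pt n p) (pt n (p + t)) = r)).

(* offset of g_r(p) from p, with g_{r_n} = lim_{r -> r_n^-} g_r *)
Definition off (n : nat) (r p : R) : R :=
  if Rlt_dec r (rn n) then off0 n r p
  else epsilon (inhabits 0)
         (fun L => filterlim (fun r' => off0 n r' p) (at_left (rn n)) (locally L)).

Definition g (n : nat) (r p : R) : R := frac_part (p + off n r p).

Definition is_star (n l : nat) (r : R) (u : nat -> R) : Prop :=
  (forall i, (i < 2 * l + 1)%nat -> u (S i) = g n r (u i)) /\
  u (2 * l + 1)%nat = u 0%nat /\
  sum_f_R0 (fun i => dP (u i) (u (S i))) (2 * l) = INR l.

Definition star_side (n l : nat) (r p : R) : Prop :=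
  0 < r <= rn n /\ exists u, u 0%nat = p /\ is_star n l r u.

Definition s (n l : nat) (p : R) : R :=
  epsilon (inhabits 0) (fun r => star_side n l r p).

Definition vcross (n l : nat) (p : R) : Prop :=
  exists u, u 0%nat = p /\ is_star n l (s n l p) u /\
    exists i k, (i <= 2 * l)%nat /\ u i = IZR k / INR n.

Definition mcross (n l : nat) (p : R) : Prop :=
  exists u, u 0%nat = p /\ is_star n l (s n l p) u /\
    exists i k, (i <= 2 * l)%nat /\ u i = (IZR k + / 2) / INR n.

Definition crossing (n l : nat) (p : R) : Prop := vcross n l p \/ mcross n l p.

(* Main.v *)
Require Import Defs.
From Stdlib Require Import Reals Lra Lia ClassicalEpsilon FunctionalExtensionality PropExtensionality.
From Coquelicot Require Import Coquelicot.
Open Scope R_scope.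


Lemma frac_spec r k f : 0 <= f < 1 -> r = IZR k + f -> frac_part r = f.
Proof. intros Hf Hr. destruct (Int_part_frac_part_spec r k f Hf Hr) as [_ H]. auto. Qed.

Lemma Int_spec r k f : 0 <= f < 1 -> r = IZR k + f -> Int_part r = k.
Proof. intros Hf Hr. destruct (Int_part_frac_part_spec r k f Hf Hr) as [H _]. auto. Qed.

Lemma frac_range r : 0 <= frac_part r < 1.
Proof. destruct (base_fp r). lra. Qed.

Lemma frac_decomp r : r = IZR (Int_part r) + frac_part r.
Proof. apply Rplus_Int_part_frac_part. Qed.

Lemma frac_add_int r k : frac_part (r + IZR k) = frac_part r.
Proof.
  apply (frac_spec _ (Int_part r + k)). apply frac_range.
  rewrite plus_IZR. rewrite (frac_decomp r) at 1. ring.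
Qed.

Lemma frac_in r : 0 <= r < 1 -> frac_part r = r.
Proof. intros H. apply (frac_spec _ 0). auto. simpl. ring. Qed.

Lemma frac_int_diff r : exists k, r = IZR k + frac_part r.
Proof. exists (Int_part r). apply frac_decomp. Qed.

Definition th (n : nat) := 2 * PI / INR n.

Definition comb (g : R) (a b : R * R) : R * R :=
  ((1 - g) * fst a + g * fst b, (1 - g) * snd a + g * snd b).

Definition rot (a : R) (p : R * R) : R * R :=
  (cos a * fst p - sin a * snd p, sin a * fst p + cos a * snd p).

Definition cj (p : R * R) : R * R := (fst p, - snd p).

Definition sqd (p q : R * R) : R := (fst p - fst q) ^ 2 + (snd p - snd q) ^ 2.

Definition DD (n : nat) (a b : R) : R := edist (pt n a) (pt n b).

Lemma INR_n_pos n : (0 < n)%nat -> 0 < INR n.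
Proof. intros. apply lt_0_INR. auto. Qed.

Lemma vert_eq n k : (0 < n)%nat -> vert n k = (cos (IZR k * th n), sin (IZR k * th n)).
Proof.
  intros Hn. unfold vert, th. assert (0 < INR n) by (apply INR_n_pos; auto).
  replace (2 * PI * IZR k / INR n) with (IZR k * (2 * PI / INR n)) by (field; lra). auto.
Qed.

Lemma pt_edge n t k g : (0 < n)%nat -> 0 <= g <= 1 -> INR n * t = IZR k + g ->
  pt n t = comb g (vert n k) (vert n (k + 1)).
Proof.
  intros Hn Hg Ht. destruct (Req_dec g 1) as [E|E].
  - subst g. unfold pt.
    assert (H1 : Int_part (INR n * t) = (k + 1)%Z) by (apply (Int_spec _ _ 0); [lra| rewrite Ht, plus_IZR; simpl; ring]).
    assert (H2 : frac_part (INR n * t) = 0) by (apply (frac_spec _ (k+1)); [lra| rewrite Ht, plus_IZR; simpl; ring]).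
    rewrite H1, H2. unfold comb. simpl. f_equal; ring.
  - unfold pt.
    assert (H1 : Int_part (INR n * t) = k) by (apply (Int_spec _ _ g); [lra| auto]).
    assert (H2 : frac_part (INR n * t) = g) by (apply (frac_spec _ k); [lra| auto]).
    rewrite H1, H2. reflexivity.
Qed.

Lemma pt_edge_frac n t : (0 < n)%nat ->
  pt n t = comb (frac_part (INR n * t)) (vert n (Int_part (INR n * t))) (vert n (Int_part (INR n * t) + 1)).
Proof. intros Hn. apply pt_edge; auto. pose proof (frac_range (INR n * t)); lra. apply frac_decomp. Qed.

Lemma rot_comb a g p q : comb g (rot a p) (rot a q) = rot a (comb g p q).
Proof. unfold comb, rot. simpl. f_equal; ring. Qed.

Lemma vert_shift n k j : (0 < n)%nat -> vert n (k + j) = rot (IZR j * th n) (vert n k).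
Proof.
  intros Hn. rewrite !vert_eq by auto. unfold rot. simpl.
  rewrite plus_IZR. replace ((IZR k + IZR j) * th n) with (IZR j * th n + IZR k * th n) by ring.
  rewrite cos_plus, sin_plus. f_equal; ring.
Qed.

Lemma pt_shift n t j : (0 < n)%nat -> pt n (t + IZR j / INR n) = rot (IZR j * th n) (pt n t).
Proof.
  intros Hn. assert (0 < INR n) by (apply INR_n_pos; auto).
  rewrite (pt_edge_frac n t Hn).
  rewrite (pt_edge n _ (Int_part (INR n * t) + j) (frac_part (INR n * t))); auto.
  - replace (Int_part (INR n * t) + j + 1)%Z with ((Int_part (INR n * t) + 1) + j)%Z by ring.
    rewrite !vert_shift by auto. apply rot_comb.
  - pose proof (frac_range (INR n * t)); lra.
  - rewrite plus_IZR. transitivity (INR n * t + IZR j). field; lra.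
    rewrite (frac_decomp (INR n * t)) at 1. ring.
Qed.

Lemma rot_2PI_int m p : rot (IZR m * (2 * PI)) p = p.
Proof.
  assert (C : cos (IZR m * (2 * PI)) = 1 /\ sin (IZR m * (2 * PI)) = 0).
  { destruct (Z.le_gt_cases 0 m) as [H|H].
    - destruct (IZN m H) as [k ->]. rewrite <- INR_IZR_INZ.
      replace (INR k * (2 * PI)) with (0 + 2 * INR k * PI) by ring.
      rewrite cos_period, sin_period, cos_0, sin_0. auto.
    - assert (H' : (0 <= - m)%Z) by lia. destruct (IZN (- m) H') as [k Hk].
      replace (IZR m) with (- INR k) by (rewrite INR_IZR_INZ, <- Hk, opp_IZR; ring).
      replace (- INR k * (2 * PI)) with (- (0 + 2 * INR k * PI)) by ring.
      rewrite cos_neg, sin_neg, cos_period, sin_period, cos_0, sin_0. split; [auto|ring]. }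
  destruct C as [C1 C2]. unfold rot. rewrite C1, C2. destruct p; simpl; f_equal; ring.
Qed.

Lemma pt_per n t m : (0 < n)%nat -> pt n (t + IZR m) = pt n t.
Proof.
  intros Hn. assert (0 < INR n) by (apply INR_n_pos; auto).
  replace (t + IZR m) with (t + IZR (m * Z.of_nat n) / INR n).
  - rewrite pt_shift by auto. unfold th. rewrite mult_IZR, <- INR_IZR_INZ.
    replace (IZR m * INR n * (2 * PI / INR n)) with (IZR m * (2 * PI)) by (field; lra).
    apply rot_2PI_int.
  - rewrite mult_IZR, <- INR_IZR_INZ. field. lra.
Qed.

Lemma sin2cos2 a : sin a ^ 2 + cos a ^ 2 = 1.
Proof. rewrite <- (sin2_cos2 a). unfold Rsqr. ring. Qed.

Lemma sqd_rot a p q : sqd (rot a p) (rot a q) = sqd p q.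
Proof.
  unfold sqd, rot; simpl. pose proof (sin2cos2 a) as H.
  transitivity ((sin a ^ 2 + cos a ^ 2) * ((fst p - fst q) ^ 2 + (snd p - snd q) ^ 2)). ring.
  rewrite H. ring.
Qed.

Lemma sqd_cj p q : sqd (cj p) (cj q) = sqd p q.
Proof. unfold sqd, cj; simpl. ring. Qed.

Lemma sqd_sym p q : sqd p q = sqd q p.
Proof. unfold sqd. ring. Qed.

Lemma sqd_nonneg p q : 0 <= sqd p q.
Proof. unfold sqd. apply Rplus_le_le_0_compat; apply pow2_ge_0. Qed.

Lemma edist_sqd p q : edist p q = sqrt (sqd p q).
Proof. reflexivity. Qed.

Lemma D_shift n a b j : (0 < n)%nat -> DD n (a + IZR j / INR n) (b + IZR j / INR n) = DD n a b.
Proof. intros Hn. unfold DD. rewrite !edist_sqd, !pt_shift by auto. rewrite sqd_rot. auto. Qed.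

Lemma D_per n a b m m' : (0 < n)%nat -> DD n (a + IZR m) (b + IZR m') = DD n a b.
Proof. intros Hn. unfold DD. rewrite !pt_per by auto. auto. Qed.

Lemma D_sym n a b : DD n a b = DD n b a.
Proof. unfold DD. rewrite !edist_sqd, sqd_sym. auto. Qed.

Lemma D_frac n a b : (0 < n)%nat -> DD n (frac_part a) (frac_part b) = DD n a b.
Proof.
  intros Hn. destruct (frac_int_diff a) as [ka Ha]. destruct (frac_int_diff b) as [kb Hb].
  rewrite <- (D_per n (frac_part a) (frac_part b) ka kb Hn). f_equal; lra.
Qed.

Lemma cj_comb g p q : cj (comb g p q) = comb g (cj p) (cj q).
Proof. unfold cj, comb; simpl. f_equal; ring. Qed.

Lemma vert_neg n k : (0 < n)%nat -> vert n (- k) = cj (vert n k).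
Proof.
  intros Hn. rewrite !vert_eq by auto. unfold cj; simpl. rewrite opp_IZR.
  replace (- IZR k * th n) with (- (IZR k * th n)) by ring. rewrite cos_neg, sin_neg. auto.
Qed.

Lemma pt_neg n t : (0 < n)%nat -> pt n (- t) = cj (pt n t).
Proof.
  intros Hn. rewrite (pt_edge_frac n t Hn). set (k := Int_part (INR n * t)). set (g := frac_part (INR n * t)).
  pose proof (frac_range (INR n * t)) as Hg. fold g in Hg.
  rewrite (pt_edge n (- t) (- k - 1) (1 - g)); auto.
  - replace (- k - 1 + 1)%Z with (- k)%Z by ring. replace (- k - 1)%Z with (- (k + 1))%Z by ring.
    rewrite !vert_neg by auto. rewrite cj_comb. unfold comb; simpl. f_equal; ring.
  - lra.
  - rewrite minus_IZR, opp_IZR. unfold k, g. transitivity (- (INR n * t)). ring.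
    rewrite (frac_decomp (INR n * t)) at 1. simpl. ring.
Qed.

Lemma D_neg n a b : (0 < n)%nat -> DD n (- a) (- b) = DD n a b.
Proof. intros Hn. unfold DD. rewrite !edist_sqd, !pt_neg by auto. rewrite sqd_cj. auto. Qed.


Lemma sqrt_le_of_sq X Y : 0 <= Y -> X <= Y ^ 2 -> sqrt X <= Y.
Proof. intros HY HX. rewrite <- (sqrt_pow2 Y HY). apply sqrt_le_1_alt. auto. Qed.

Lemma sq_le_of_sqrt X Y : 0 <= X -> 0 <= Y -> sqrt X <= sqrt Y -> X <= Y.
Proof.
  intros HX HY H. rewrite <- (sqrt_sqrt X HX), <- (sqrt_sqrt Y HY).
  pose proof (sqrt_pos X). nra.
Qed.

Lemma cs a1 a2 b1 b2 : a1 * b1 + a2 * b2 <= sqrt (a1 ^ 2 + a2 ^ 2) * sqrt (b1 ^ 2 + b2 ^ 2).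
Proof.
  assert (HA : 0 <= a1 ^ 2 + a2 ^ 2) by nra. assert (HB : 0 <= b1 ^ 2 + b2 ^ 2) by nra.
  rewrite <- sqrt_mult by auto.
  destruct (Rle_dec (a1 * b1 + a2 * b2) 0) as [H|H].
  - pose proof (sqrt_pos ((a1 ^ 2 + a2 ^ 2) * (b1 ^ 2 + b2 ^ 2))). lra.
  - rewrite <- (sqrt_pow2 (a1 * b1 + a2 * b2)) by lra. apply sqrt_le_1_alt.
    assert (0 <= (a1 * b2 - a2 * b1) ^ 2) by apply pow2_ge_0. nra.
Qed.

Lemma edist_tri p q r : edist p r <= edist p q + edist q r.
Proof.
  rewrite !edist_sqd. unfold sqd.
  set (a1 := fst p - fst q). set (a2 := snd p - snd q).
  set (b1 := fst q - fst r). set (b2 := snd q - snd r).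
  replace (fst p - fst r) with (a1 + b1) by (unfold a1, b1; ring).
  replace (snd p - snd r) with (a2 + b2) by (unfold a2, b2; ring).
  apply sqrt_le_of_sq. pose proof (sqrt_pos (a1 ^ 2 + a2 ^ 2)); pose proof (sqrt_pos (b1 ^ 2 + b2 ^ 2)); lra.
  pose proof (cs a1 a2 b1 b2).
  assert (HA : 0 <= a1 ^ 2 + a2 ^ 2) by nra. assert (HB : 0 <= b1 ^ 2 + b2 ^ 2) by nra.
  pose proof (sqrt_sqrt _ HA). pose proof (sqrt_sqrt _ HB). nra.
Qed.

Lemma edist_sym p q : edist p q = edist q p.
Proof. rewrite !edist_sqd, sqd_sym. auto. Qed.

Lemma edist_nonneg p q : 0 <= edist p q.
Proof. apply sqrt_pos. Qed.

Lemma edist_proj p q u1 u2 : u1 ^ 2 + u2 ^ 2 = 1 ->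
  (fst p - fst q) * u1 + (snd p - snd q) * u2 <= edist p q.
Proof.
  intros Hu. pose proof (cs (fst p - fst q) (snd p - snd q) u1 u2) as H.
  rewrite Hu, sqrt_1 in H. rewrite edist_sqd. unfold sqd. lra.
Qed.

Lemma edist_le_abs p q : edist p q <= Rabs (fst p - fst q) + Rabs (snd p - snd q).
Proof.
  rewrite edist_sqd. unfold sqd. apply sqrt_le_of_sq.
  pose proof (Rabs_pos (fst p - fst q)); pose proof (Rabs_pos (snd p - snd q)); lra.
  rewrite <- (pow2_abs (fst p - fst q)), <- (pow2_abs (snd p - snd q)).
  pose proof (Rabs_pos (fst p - fst q)); pose proof (Rabs_pos (snd p - snd q)); nra.
Qed.

Lemma edist_lt_sq p q r : edist p q < r -> sqd p q < r ^ 2.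
Proof.
  intros H. rewrite edist_sqd in H. pose proof (sqrt_pos (sqd p q)).
  pose proof (sqrt_sqrt _ (sqd_nonneg p q)). nra.
Qed.

Lemma edist_lt_of_sq p q r : 0 <= r -> sqd p q < r ^ 2 -> edist p q < r.
Proof.
  intros Hr H. rewrite edist_sqd. rewrite <- (sqrt_pow2 r Hr). apply sqrt_lt_1_alt.
  split; auto. apply sqd_nonneg.
Qed.

Lemma edist_lt_iff p q p' q' : sqd p q < sqd p' q' -> edist p q < edist p' q'.
Proof. intros H. rewrite !edist_sqd. apply sqrt_lt_1_alt. split; auto. apply sqd_nonneg. Qed.

Lemma edist_le_iff p q p' q' : sqd p q <= sqd p' q' -> edist p q <= edist p' q'.
Proof. intros H. rewrite !edist_sqd. apply sqrt_le_1_alt. auto. Qed.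

Lemma edist_eq_iff p q p' q' : sqd p q = sqd p' q' -> edist p q = edist p' q'.
Proof. intros H. rewrite !edist_sqd, H. auto. Qed.

Lemma sqd_lt_of_edist p q p' q' : edist p q < edist p' q' -> sqd p q < sqd p' q'.
Proof.
  intros H. destruct (Rlt_le_dec (sqd p q) (sqd p' q')) as [|H']; auto.
  apply edist_le_iff in H'. lra.
Qed.

Lemma sqd_le_of_edist p q p' q' : edist p q <= edist p' q' -> sqd p q <= sqd p' q'.
Proof.
  intros H. destruct (Rle_lt_dec (sqd p q) (sqd p' q')) as [|H']; auto.
  apply edist_lt_iff in H'. lra.
Qed.

Lemma sqd_comb g a b c : sqd (comb g a b) c = (1 - g) * sqd a c + g * sqd b c - g * (1 - g) * sqd a b.
Proof. unfold sqd, comb; simpl. ring. Qed.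

Lemma vert_bounds n k : (0 < n)%nat -> Rabs (fst (vert n k)) <= 1 /\ Rabs (snd (vert n k)) <= 1.
Proof.
  intros Hn. rewrite vert_eq by auto. simpl. split; apply Rabs_le; split;
  first [apply COS_bound | apply SIN_bound].
Qed.

Lemma comb_lip_fst g g' a b : Rabs (fst a) <= 1 -> Rabs (fst b) <= 1 ->
  Rabs (fst (comb g a b) - fst (comb g' a b)) <= 2 * Rabs (g - g').
Proof.
  intros Ha Hb. unfold comb; simpl.
  replace ((1 - g) * fst a + g * fst b - ((1 - g') * fst a + g' * fst b)) with ((g - g') * (fst b - fst a)) by ring.
  rewrite Rabs_mult. assert (Rabs (fst b - fst a) <= 2).
  { pose proof (Rabs_triang (fst b) (- fst a)). rewrite Rabs_Ropp in H. unfold Rminus. lra. }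
  pose proof (Rabs_pos (g - g')). nra.
Qed.

Lemma comb_lip_snd g g' a b : Rabs (snd a) <= 1 -> Rabs (snd b) <= 1 ->
  Rabs (snd (comb g a b) - snd (comb g' a b)) <= 2 * Rabs (g - g').
Proof.
  intros Ha Hb. unfold comb; simpl.
  replace ((1 - g) * snd a + g * snd b - ((1 - g') * snd a + g' * snd b)) with ((g - g') * (snd b - snd a)) by ring.
  rewrite Rabs_mult. assert (Rabs (snd b - snd a) <= 2).
  { pose proof (Rabs_triang (snd b) (- snd a)). rewrite Rabs_Ropp in H. unfold Rminus. lra. }
  pose proof (Rabs_pos (g - g')). nra.
Qed.

Lemma pt_lip_le n s t : (0 < n)%nat -> s <= t -> t - s < / INR n ->
  Rabs (fst (pt n s) - fst (pt n t)) <= 2 * INR n * (t - s) /\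
  Rabs (snd (pt n s) - snd (pt n t)) <= 2 * INR n * (t - s).
Proof.
  intros Hn Hst Hd. assert (Hn' : 0 < INR n) by (apply INR_n_pos; auto).
  set (k := Int_part (INR n * s)). set (g := frac_part (INR n * s)).
  pose proof (frac_range (INR n * s)) as Hg. fold g in Hg.
  assert (Hs : INR n * s = IZR k + g) by apply frac_decomp.
  assert (Hnt : INR n * t - INR n * s < 1).
  { replace (INR n * t - INR n * s) with (INR n * (t - s)) by ring.
    apply Rmult_lt_compat_l with (r := INR n) in Hd; auto. rewrite Rinv_r in Hd; lra. }
  pose proof (vert_bounds n k Hn) as [B1 B2]. pose proof (vert_bounds n (k+1) Hn) as [B3 B4].
  pose proof (vert_bounds n (k+1+1) Hn) as [B5 B6].
  assert (Hts : INR n * s <= INR n * t) by (apply Rmult_le_compat_l; lra).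
  destruct (Rle_dec (INR n * t) (IZR k + 1)) as [H1|H1].
  - rewrite (pt_edge n s k g Hn) by (auto; lra).
    rewrite (pt_edge n t k (INR n * t - IZR k) Hn) by lra.
    replace (2 * INR n * (t - s)) with (2 * Rabs (g - (INR n * t - IZR k))).
    + split; [apply comb_lip_fst | apply comb_lip_snd]; auto.
    + assert (INR n * s <= INR n * t) by (apply Rmult_le_compat_l; lra).
      rewrite Rabs_left1 by lra. lra.
  - apply Rnot_le_lt in H1. rewrite (pt_edge n s k g Hn) by (auto; lra).
    rewrite (pt_edge n t (k+1) (INR n * t - IZR (k + 1)) Hn) by (rewrite plus_IZR; simpl; lra).
    assert (E1 : vert n (k + 1) = comb 1 (vert n k) (vert n (k + 1))) by (unfold comb; destruct (vert n (k+1)); simpl; f_equal; ring).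
    assert (E2 : vert n (k + 1) = comb 0 (vert n (k + 1)) (vert n (k + 1 + 1))) by (unfold comb; destruct (vert n (k+1)); simpl; f_equal; ring).
    set (h := INR n * t - IZR (k + 1)).
    assert (Hh : IZR (k + 1) = IZR k + 1) by (rewrite plus_IZR; auto).
    assert (T : forall a b c : R, Rabs (a - c) <= Rabs (a - b) + Rabs (b - c)).
    { intros a b c. replace (a - c) with ((a - b) + (b - c)) by ring. apply Rabs_triang. }
    pose proof (comb_lip_fst g 1 (vert n k) (vert n (k+1)) B1 B3).
    pose proof (comb_lip_fst 0 h (vert n (k+1)) (vert n (k+1+1)) B3 B5).
    pose proof (comb_lip_snd g 1 (vert n k) (vert n (k+1)) B2 B4).
    pose proof (comb_lip_snd 0 h (vert n (k+1)) (vert n (k+1+1)) B4 B6).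
    rewrite <- E1 in H, H2. rewrite <- E2 in H0, H3.
    rewrite (Rabs_left1 (g - 1)) in H, H2 by lra.
    rewrite (Rabs_left1 (0 - h)) in H0, H3 by (unfold h; lra).
    split.
    + eapply Rle_trans. apply (T _ (fst (vert n (k + 1)))). unfold h in *. lra.
    + eapply Rle_trans. apply (T _ (snd (vert n (k + 1)))). unfold h in *. lra.
Qed.

Lemma pt_lip n s t : (0 < n)%nat -> Rabs (t - s) < / INR n ->
  edist (pt n s) (pt n t) <= 4 * INR n * Rabs (t - s).
Proof.
  intros Hn Hd. destruct (Rle_dec s t) as [H|H].
  - rewrite Rabs_right in * by lra. destruct (pt_lip_le n s t Hn H Hd).
    pose proof (edist_le_abs (pt n s) (pt n t)). lra.
  - rewrite Rabs_left in * by lra. destruct (pt_lip_le n t s Hn ltac:(lra) ltac:(lra)).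
    rewrite edist_sym. pose proof (edist_le_abs (pt n t) (pt n s)). lra.
Qed.

Definition phi (n : nat) (x t : R) : R := DD n x (x + t).

Lemma phi_lip n x s t : (0 < n)%nat -> Rabs (t - s) < / INR n ->
  Rabs (phi n x t - phi n x s) <= 4 * INR n * Rabs (t - s).
Proof.
  intros Hn Hd. unfold phi, DD.
  assert (Hd' : Rabs ((x + t) - (x + s)) < / INR n) by (replace ((x+t)-(x+s)) with (t - s) by ring; auto).
  pose proof (pt_lip n (x + s) (x + t) Hn ltac:(rewrite Rabs_minus_sym; replace ((x+t)-(x+s)) with (t - s) in Hd' by ring; replace ((x+s)-(x+t)) with (s - t) by ring; rewrite Rabs_minus_sym; auto)) as H.
  replace (x + t - (x + s)) with (t - s) in H by ring.
  pose proof (edist_tri (pt n x) (pt n (x + s)) (pt n (x + t))).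
  pose proof (edist_tri (pt n x) (pt n (x + t)) (pt n (x + s))).
  rewrite (edist_sym (pt n (x + t)) (pt n (x + s))) in H1.
  apply Rabs_le. lra.
Qed.

Lemma phi_cont n x : (0 < n)%nat -> continuity (phi n x).
Proof.
  intros Hn t. assert (Hn' : 0 < INR n) by (apply INR_n_pos; auto).
  unfold continuity_pt, continue_in, limit1_in, limit_in. intros eps Heps.
  exists (Rmin (/ INR n) (eps / (8 * INR n))). split.
  - apply Rmin_pos. apply Rinv_0_lt_compat; auto. apply Rdiv_lt_0_compat; lra.
  - intros y [_ Hy]. simpl in *. unfold R_dist in *.
    assert (Hy1 : Rabs (y - t) < / INR n) by (eapply Rlt_le_trans; [apply Hy| apply Rmin_l]).
    assert (Hy2 : Rabs (y - t) < eps / (8 * INR n)) by (eapply Rlt_le_trans; [apply Hy| apply Rmin_r]).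
    pose proof (phi_lip n x t y Hn Hy1).
    apply Rle_lt_trans with (4 * INR n * Rabs (y - t)); auto.
    assert (4 * INR n * Rabs (y - t) < 4 * INR n * (eps / (8 * INR n))) by (apply Rmult_lt_compat_l; lra).
    replace (4 * INR n * (eps / (8 * INR n))) with (eps / 2) in H0 by (field; lra). lra.
Qed.

Lemma ivt_up (f : R -> R) a b y : continuity f -> a < b -> f a < y -> y < f b ->
  exists z, a < z < b /\ f z = y.
Proof.
  intros Hc Hab Ha Hb.
  assert (Hc' : continuity (fun t => f t - y)).
  { apply continuity_minus; auto. apply continuity_const. intros u v; auto. }
  destruct (IVT (fun t => f t - y) a b Hc' Hab) as [z [Hz1 Hz2]]; cbv beta; try lra.
  cbv beta in Hz2. exists z. split; [|lra]. destruct Hz1. split.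
    + destruct H; auto. subst. lra.
    + destruct H0; auto. subst. lra.
Qed.

Lemma ivt_down (f : R -> R) a b y : continuity f -> a < b -> y < f a -> f b < y ->
  exists z, a < z < b /\ f z = y.
Proof.
  intros Hc Hab Ha Hb.
  destruct (ivt_up (fun t => - f t) a b (- y) (continuity_opp _ Hc) Hab) as [z [Hz1 Hz2]];
    cbv beta; try lra.
  exists z. split; auto. cbv beta in Hz2. lra.
Qed.

Lemma phi_0 n x : phi n x 0 = 0.
Proof. unfold phi, DD. rewrite Rplus_0_r, edist_sqd. unfold sqd.
  replace ((fst (pt n x) - fst (pt n x)) ^ 2 + (snd (pt n x) - snd (pt n x)) ^ 2) with 0 by ring. apply sqrt_0. Qed.

Lemma phi_nonneg n x t : 0 <= phi n x t.
Proof. apply edist_nonneg. Qed.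


Lemma sqd_vert n a b : (0 < n)%nat ->
  sqd (vert n a) (vert n b) = 2 - 2 * cos ((IZR b - IZR a) * th n).
Proof.
  intros Hn. rewrite !vert_eq by auto. unfold sqd; simpl.
  replace ((IZR b - IZR a) * th n) with (IZR b * th n - IZR a * th n) by ring.
  rewrite cos_minus. pose proof (sin2cos2 (IZR a * th n)). pose proof (sin2cos2 (IZR b * th n)).
  nra.
Qed.

Lemma sin_ge_lemma a b : 0 <= a -> a <= PI / 2 -> a <= b -> b <= PI - a -> sin a <= sin b.
Proof.
  intros H1 H2 H3 H4. pose proof PI_RGT_0.
  destruct (Rle_dec b (PI / 2)).
  - apply sin_incr_1; lra.
  - rewrite <- (sin_PI_x b). apply sin_incr_1; lra.
Qed.

Section Geo.
Variable n : nat.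
Hypothesis Hn6 : (6 <= n)%nat.

Let Hn : (0 < n)%nat. Proof. lia. Qed.
Let Hn' : 0 < INR n. Proof. apply INR_n_pos; lia. Qed.
Let Hn6' : 6 <= INR n. Proof. replace 6 with (INR 6) by (simpl; ring). apply le_INR; auto. Qed.

Lemma th_pos : 0 < th n.
Proof. unfold th. pose proof PI_RGT_0. apply Rdiv_lt_0_compat; lra. Qed.

Lemma th_le : th n <= PI / 3.
Proof.
  unfold th. pose proof PI_RGT_0. apply Rle_trans with (2 * PI / 6).
  - unfold Rdiv. apply Rmult_le_compat_l; [lra|]. apply Rinv_le_contravar; lra.
  - lra.
Qed.

Lemma cos_th_lt1 : cos (th n) < 1.
Proof.
  rewrite <- cos_0. pose proof th_pos. pose proof th_le. pose proof PI_RGT_0.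
  apply cos_decreasing_1; lra.
Qed.

Lemma Chalf_bound : 3 / 4 <= cos (th n / 2) ^ 2 /\ 0 < cos (th n / 2).
Proof.
  pose proof th_pos. pose proof th_le. pose proof PI_RGT_0.
  assert (Hc : cos (PI / 6) <= cos (th n / 2)) by (apply cos_decr_1; lra).
  rewrite cos_PI6 in Hc. assert (Hs : sqrt 3 * sqrt 3 = 3) by (apply sqrt_sqrt; lra).
  assert (0 < sqrt 3) by (apply sqrt_lt_R0; lra). split; nra.
Qed.

Lemma cos_th_C : cos (th n) = 2 * cos (th n / 2) ^ 2 - 1.
Proof. replace (th n) with (2 * (th n / 2)) at 1 by field. rewrite cos_2a_cos. ring. Qed.

Lemma cos_3half : cos (3 * (th n / 2)) = 4 * cos (th n / 2) ^ 3 - 3 * cos (th n / 2).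
Proof.
  set (a := th n / 2). replace (3 * a) with (2 * a + a) by ring.
  rewrite cos_plus, cos_2a_cos, sin_2a.
  assert (E : sin a ^ 2 = 1 - cos a ^ 2) by (pose proof (sin2cos2 a); lra).
  transitivity (2 * cos a ^ 3 - cos a - 2 * cos a * sin a ^ 2). ring. rewrite E. ring.
Qed.

Lemma Delta_ge i : (INR i + 1) * th n <= PI ->
  1 - cos (th n) <= cos (INR i * th n) - cos ((INR i + 1) * th n).
Proof.
  intros Hi. pose proof th_pos. pose proof th_le. pose proof PI_RGT_0. pose proof (pos_INR i).
  replace (1 - cos (th n)) with (cos 0 - cos (th n)) by (rewrite cos_0; ring). rewrite !form2.
  replace ((0 - th n) / 2) with (- (th n / 2)) by field.
  replace ((INR i * th n - (INR i + 1) * th n) / 2) with (- (th n / 2)) by field.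
  rewrite sin_neg.
  replace ((0 + th n) / 2) with (th n / 2) by field.
  assert (Hs : 0 < sin (th n / 2)) by (apply sin_gt_0; lra).
  assert (sin (th n / 2) <= sin ((INR i * th n + (INR i + 1) * th n) / 2)).
  { apply sin_ge_lemma; try lra; nra. }
  nra.
Qed.

Definition zz (f : R) := comb f (vert n 0) (vert n 1).

Definition aa (f : R) (j : Z) := sqd (zz f) (vert n j).

Lemma aa_formula f j : aa f j =
  (1 - f) * (2 - 2 * cos (IZR j * th n)) + f * (2 - 2 * cos ((IZR j - 1) * th n)) - f * (1 - f) * (2 - 2 * cos (th n)).
Proof.
  unfold aa, zz. rewrite sqd_comb. rewrite !sqd_vert by auto.
  replace (IZR j - IZR 0) with (IZR j) by (simpl; ring).
  replace (IZR 1 - IZR 0) with 1 by (simpl; ring). replace (IZR 1) with 1 by auto.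
  rewrite Rmult_1_l. ring.
Qed.

Definition condE (f : R) (j : Z) := aa f (j + 1) - aa f j >= 2 - 2 * cos (th n).

Lemma condE_diff f j : aa f (j + 1) - aa f j =
  2 * ((1 - f) * (cos (IZR j * th n) - cos ((IZR j + 1) * th n)) + f * (cos ((IZR j - 1) * th n) - cos (IZR j * th n))).
Proof. rewrite !aa_formula. rewrite plus_IZR. replace (IZR 1) with 1 by auto.
  replace (IZR j + 1 - 1) with (IZR j) by ring. ring. Qed.

Lemma condE_std f (j : nat) : 0 <= f <= 1 -> (1 <= j)%nat -> (2 * (j + 1) <= n)%nat -> condE f (Z.of_nat j).
Proof.
  intros Hf Hj Hjn. unfold condE. rewrite condE_diff. rewrite <- INR_IZR_INZ.
  assert (HI : (INR j + 1) * th n <= PI).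
  { unfold th. apply le_INR in Hjn. rewrite mult_INR, plus_INR in Hjn.
    replace (INR 2) with 2 in Hjn by (simpl; ring). replace (INR 1) with 1 in Hjn by auto.
    replace ((INR j + 1) * (2 * PI / INR n)) with (PI * (2 * (INR j + 1)) * / INR n) by (field; lra).
    pose proof PI_RGT_0. apply Rmult_le_reg_r with (INR n); auto.
    rewrite Rmult_assoc, Rinv_l by lra. nra. }
  pose proof (Delta_ge j HI).
  assert (HJ : 1 <= INR j) by (replace 1 with (INR 1) by auto; apply le_INR; auto).
  destruct j as [|j']; [lia|].
  pose proof (Delta_ge j'). rewrite S_INR in *.
  assert (HI' : (INR j' + 1) * th n <= PI) by (pose proof th_pos; nra).
  specialize (H0 HI'). replace (INR j' + 1 - 1) with (INR j') by ring.
  replace (INR j' + 1 + 1) with (INR j' + 1 + 1) in * by ring.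
  apply Rle_ge. nra.
Qed.

Lemma sqd_same_edge g1 g2 a b : sqd (comb g1 a b) (comb g2 a b) = (g2 - g1) ^ 2 * sqd a b.
Proof. unfold sqd, comb; simpl. ring. Qed.

Lemma s2_pos : 0 < sqd (vert n 0) (vert n 1).
Proof. rewrite sqd_vert by auto. pose proof cos_th_lt1. simpl. replace ((1 - 0) * th n) with (th n) by ring. lra. Qed.

Lemma s2_eq j : sqd (vert n j) (vert n (j + 1)) = 2 - 2 * cos (th n).
Proof. rewrite sqd_vert by auto. rewrite plus_IZR. replace (IZR j + IZR 1 - IZR j) with 1 by (simpl; ring). rewrite Rmult_1_l. auto. Qed.

Definition HH (f u : R) := sqd (zz f) (pt n (u / INR n)).

Lemma HH_edge f (j : Z) u : IZR j <= u <= IZR j + 1 ->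
  HH f u = (1 - (u - IZR j)) * aa f j + (u - IZR j) * aa f (j + 1) - (u - IZR j) * (1 - (u - IZR j)) * (2 - 2 * cos (th n)).
Proof.
  intros Hu. unfold HH. rewrite (pt_edge n _ j (u - IZR j)) by (auto; try lra; field; lra).
  rewrite sqd_sym, sqd_comb. rewrite <- s2_eq with (j := j). unfold aa. rewrite !(sqd_sym (zz f)). auto.
Qed.

Lemma HH_edge_mono f (j : Z) u1 u2 : condE f j -> IZR j <= u1 -> u1 < u2 -> u2 <= IZR j + 1 -> HH f u1 < HH f u2.
Proof.
  intros Hc H1 H2 H3. rewrite (HH_edge f j u1) by lra. rewrite (HH_edge f j u2) by lra.
  unfold condE in Hc. pose proof cos_th_lt1.
  set (g1 := u1 - IZR j). set (g2 := u2 - IZR j). assert (0 <= g1) by (unfold g1; lra).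
  assert (g1 < g2) by (unfold g1, g2; lra). assert (g2 <= 1) by (unfold g2; lra).
  set (s := 2 - 2 * cos (th n)). assert (0 < s) by (unfold s; lra). fold s in Hc.
  assert (E : (1 - g2) * aa f j + g2 * aa f (j + 1) - g2 * (1 - g2) * s - ((1 - g1) * aa f j + g1 * aa f (j + 1) - g1 * (1 - g1) * s)
     = (g2 - g1) * (aa f (j + 1) - aa f j - s) + (g2 * g2 - g1 * g1) * s) by ring.
  assert (0 < (g2 - g1) * (aa f (j + 1) - aa f j - s) + (g2 * g2 - g1 * g1) * s).
  { assert (0 <= (g2 - g1) * (aa f (j + 1) - aa f j - s)) by (apply Rmult_le_pos; lra).
    assert (0 < (g2 * g2 - g1 * g1) * s) by (apply Rmult_lt_0_compat; nra). lra. }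
  lra.
Qed.

Lemma HH_edge0 f u : 0 <= f -> f <= u <= 1 -> HH f u = (u - f) ^ 2 * sqd (vert n 0) (vert n 1).
Proof.
  intros Hf Hu. unfold HH, zz. rewrite (pt_edge n _ 0 u) by (auto; try lra; simpl; field; lra).
  simpl (0 + 1)%Z. apply sqd_same_edge.
Qed.

Lemma HH_mono f (K : nat) : 0 <= f < 1 -> (forall j : nat, (1 <= j)%nat -> (j < K)%nat -> condE f (Z.of_nat j)) ->
  forall u1 u2, f <= u1 -> u1 < u2 -> u2 <= INR K -> HH f u1 < HH f u2.
Proof.
  intros Hf. induction K as [|K IH]; intros Hc.
  - intros. simpl in *. lra.
  - intros u1 u2 H1 H2 H3. rewrite S_INR in H3.
    destruct (Rle_dec u2 (INR K)) as [E|E].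
    + apply IH; [intros j Hj1 Hj2; apply Hc; lia | lra..].
    + destruct K as [|K].
      * simpl in *. rewrite !HH_edge0 by lra. pose proof s2_pos.
        apply Rmult_lt_compat_r; auto. nra.
      * assert (HcK : condE f (Z.of_nat (S K))) by (apply Hc; lia).

        destruct (Rle_dec (INR (S K)) u1) as [E1|E1].
        -- apply (HH_edge_mono f (Z.of_nat (S K))); auto; rewrite <- ?INR_IZR_INZ; lra.
        -- apply Rlt_trans with (HH f (INR (S K))).
           ++ apply IH; [intros j Hj1 Hj2; apply Hc; lia | lra..].
           ++ apply (HH_edge_mono f (Z.of_nat (S K))); auto; rewrite <- ?INR_IZR_INZ; lra.
Qed.

End Geo.


Definition dotv (p : R * R) (a : R) := fst p * cos a + snd p * sin a.

Lemma dotv_vert n j a : (0 < n)%nat -> dotv (vert n j) a = cos (IZR j * th n - a).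
Proof. intros Hn. rewrite vert_eq by auto. unfold dotv; simpl. rewrite cos_minus. ring. Qed.

Lemma dotv_comb g p q a : dotv (comb g p q) a = (1 - g) * dotv p a + g * dotv q a.
Proof. unfold dotv, comb; simpl. ring. Qed.

Lemma edist_dotv p q a : dotv p a - dotv q a <= edist p q.
Proof.
  pose proof (edist_proj p q (cos a) (sin a)) as H.
  assert (E : cos a ^ 2 + sin a ^ 2 = 1) by (pose proof (sin2cos2 a); lra).
  specialize (H E). unfold dotv. lra.
Qed.

Lemma sqd_origin_vert n k : (0 < n)%nat -> sqd (vert n k) (0, 0) = 1.
Proof. intros Hn. rewrite vert_eq by auto. unfold sqd; simpl. pose proof (sin2cos2 (IZR k * th n)). lra. Qed.

Lemma sqd_rot_self a z : sqd z (rot a z) = (2 - 2 * cos a) * sqd z (0, 0).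
Proof.
  unfold sqd, rot; simpl. pose proof (sin2cos2 a).
  transitivity ((sin a ^ 2 + cos a ^ 2) * (fst z ^ 2 + snd z ^ 2) + (fst z ^ 2 + snd z ^ 2) - 2 * cos a * (fst z ^ 2 + snd z ^ 2)).
  ring. rewrite H. ring.
Qed.

Section Star.
Variables l m n : nat.
Hypothesis Hl : (1 <= l)%nat.
Hypothesis Hm : (2 <= m)%nat.
Hypothesis Hnm : n = ((2 * l + 1) * m)%nat.

Let Hn6 : (6 <= n)%nat. Proof. subst n. nia. Qed.
Let Hn : (0 < n)%nat. Proof. lia. Qed.
Let Hn' : 0 < INR n. Proof. apply INR_n_pos; lia. Qed.

Definition MM := (l * m)%nat.
Definition LL := INR MM / INR n.
Definition c2 := 2 - 2 * cos (INR MM * th n).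
Definition cc := sqrt c2.

Lemma INR_n_eq : INR n = (2 * INR l + 1) * INR m.
Proof. subst n. rewrite mult_INR, plus_INR, mult_INR. simpl. ring. Qed.

Lemma INR_m_ge2 : 2 <= INR m.
Proof. replace 2 with (INR 2) by (simpl; ring). apply le_INR; auto. Qed.
Lemma INR_l_ge1 : 1 <= INR l.
Proof. replace 1 with (INR 1) by auto. apply le_INR; auto. Qed.

Lemma LL_eq : LL = INR l / (2 * INR l + 1).
Proof. unfold LL, MM. rewrite mult_INR, INR_n_eq. pose proof INR_m_ge2. pose proof INR_l_ge1. field. lra. Qed.

Lemma LL_bounds : 0 < LL < 1 / 2.
Proof. rewrite LL_eq. pose proof INR_l_ge1. split. apply Rdiv_lt_0_compat; lra.
  apply Rmult_lt_reg_r with (2 * INR l + 1); [lra|]. unfold Rdiv. rewrite Rmult_assoc, Rinv_l by lra. lra. Qed.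

Lemma Mth_eq : INR MM * th n = PI - INR m * (th n / 2).
Proof. unfold th, MM. rewrite mult_INR, INR_n_eq. pose proof INR_m_ge2. pose proof INR_l_ge1. field. lra. Qed.

Lemma mth_half_eq : INR m * (th n / 2) = PI / (2 * INR l + 1).
Proof. unfold th. rewrite INR_n_eq. pose proof INR_m_ge2. pose proof INR_l_ge1. field. lra. Qed.

Lemma c2_eq : c2 = 2 + 2 * cos (INR m * (th n / 2)).
Proof. unfold c2. rewrite Mth_eq. rewrite Rtrigo_facts.cos_pi_minus. ring. Qed.

Lemma c2_pos : 0 < c2.
Proof.
  rewrite c2_eq, mth_half_eq. pose proof INR_l_ge1. pose proof PI_RGT_0.
  assert (A1 : 0 < PI / (2 * INR l + 1)) by (apply Rdiv_lt_0_compat; lra).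
  assert (A2 : PI / (2 * INR l + 1) < PI / 2).
  { apply Rmult_lt_reg_r with (2 * (2 * INR l + 1)); [lra|]. unfold Rdiv.
    replace (PI * / (2 * INR l + 1) * (2 * (2 * INR l + 1))) with (2 * PI) by (field; lra).
    replace (PI * / 2 * (2 * (2 * INR l + 1))) with (PI * (2 * INR l + 1)) by (field; lra). nra. }
  assert (0 < cos (PI / (2 * INR l + 1))) by (apply cos_gt_0; lra).
  lra.
Qed.

Lemma cc_pos : 0 < cc.
Proof. unfold cc. apply sqrt_lt_R0. apply c2_pos. Qed.

Lemma c2_le_k (k : nat) : (k <= m)%nat -> c2 <= 2 + 2 * cos (INR k * (th n / 2)).
Proof.
  intros Hk. rewrite c2_eq. pose proof (th_pos n Hn6). pose proof PI_RGT_0.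
  pose proof (pos_INR k). pose proof INR_l_ge1.
  assert (INR k <= INR m) by (apply le_INR; auto).
  assert (INR m * (th n / 2) <= PI).
  { rewrite mth_half_eq. apply Rmult_le_reg_r with (2 * INR l + 1); [lra|]. unfold Rdiv. rewrite Rmult_assoc, Rinv_l by lra. nra. }
  assert (cos (INR m * (th n / 2)) <= cos (INR k * (th n / 2))).
  { apply cos_decr_1; nra. }
  lra.
Qed.

Lemma DD_L x : DD n x (x + LL) = cc * sqrt (sqd (pt n x) (0, 0)).
Proof.
  unfold DD, LL. replace (INR MM) with (IZR (Z.of_nat MM)) by (rewrite INR_IZR_INZ; auto).
  rewrite pt_shift by auto. rewrite edist_sqd, sqd_rot_self. unfold cc. rewrite <- sqrt_mult.
  - f_equal. unfold c2. rewrite INR_IZR_INZ. auto.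
  - pose proof c2_pos. lra.
  - apply sqd_nonneg.
Qed.

Lemma norm_formula x : sqd (pt n x) (0, 0) =
  1 - 2 * frac_part (INR n * x) * (1 - frac_part (INR n * x)) * (1 - cos (th n)).
Proof.
  rewrite (pt_edge_frac n x Hn). rewrite sqd_comb. rewrite !sqd_origin_vert by auto.
  rewrite sqd_vert by auto. rewrite plus_IZR. replace (IZR (Int_part (INR n * x)) + IZR 1 - IZR (Int_part (INR n * x))) with 1 by (simpl; ring).
  rewrite Rmult_1_l. ring.
Qed.

Lemma reduce0 x : exists x0, 0 <= x0 < / INR n /\ (forall t, DD n x (x + t) = DD n x0 (x0 + t)) /\
   frac_part (INR n * x) = INR n * x0.
Proof.
  set (k := Int_part (INR n * x)). set (f := frac_part (INR n * x)).
  pose proof (frac_range (INR n * x)) as Hf. fold f in Hf.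
  assert (Hx : INR n * x = IZR k + f) by apply frac_decomp.
  exists (f / INR n). split; [|split].
  - split. apply Rdiv_le_0_compat; lra. apply Rmult_lt_reg_r with (INR n); auto.
    unfold Rdiv. rewrite Rmult_assoc, Rinv_l by lra. lra.
  - intros t. rewrite <- (D_shift n (f / INR n) (f / INR n + t) k Hn). f_equal.
    + apply Rmult_eq_reg_l with (INR n); [|lra]. rewrite Hx. field. lra.
    + apply Rmult_eq_reg_l with (INR n); [|lra]. rewrite Rmult_plus_distr_l, Hx. field. lra.
  - field. lra.
Qed.

Lemma DD_HH x s : 0 <= x < / INR n ->
  DD n x (x + s) = sqrt (HH n (INR n * x) (INR n * x + INR n * s)).
Proof.
  intros Hx. unfold DD, HH. rewrite edist_sqd. f_equal. f_equal.
  - unfold zz. apply pt_edge; auto. split. nra.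
    assert (INR n * x < 1).
    { destruct Hx as [_ Hx]. apply Rmult_lt_compat_l with (r := INR n) in Hx; auto.
      rewrite Rinv_r in Hx by lra. lra. }
    lra. simpl. ring.
  - f_equal. field. lra.
Qed.

Lemma MG_L x s t : 0 <= s -> s < t -> t <= LL -> DD n x (x + s) < DD n x (x + t).
Proof.
  intros H1 H2 H3. destruct (reduce0 x) as [x0 [Hx0 [HD _]]]. rewrite !HD.
  rewrite !DD_HH by auto. apply sqrt_lt_1_alt. split.
  - unfold HH. apply sqd_nonneg.
  - set (f := INR n * x0).
    assert (Hf : 0 <= f < 1).
    { unfold f. split. nra. destruct Hx0 as [_ Hx]. apply Rmult_lt_compat_l with (r := INR n) in Hx; auto.
      rewrite Rinv_r in Hx by lra. lra. }
    apply (HH_mono n Hn6 f (S MM)); auto.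
    + intros j Hj1 Hj2. apply condE_std; auto. lra. rewrite Hnm. unfold MM in *. nia.
    + assert (0 <= INR n * s) by nra. lra.
    + assert (INR n * s < INR n * t) by (apply Rmult_lt_compat_l; auto). lra.
    + rewrite S_INR. assert (INR n * t <= INR n * LL) by (apply Rmult_le_compat_l; lra).
      unfold LL in H. replace (INR n * (INR MM / INR n)) with (INR MM) in H by (field; lra). lra.
Qed.

End Star.


Lemma polyA C : 3 / 4 <= C ^ 2 -> 0 < C -> C <= 1 -> 2 + (8 * C ^ 3 - 6 * C) <= (C + C ^ 2) ^ 2.
Proof.
  intros H1 H2 H3.
  assert (E : (C + C ^ 2) ^ 2 - (2 + (8 * C ^ 3 - 6 * C)) = (1 - C) * (- (C ^ 3 - 5 * C ^ 2 - 4 * C + 2))) by ring.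
  assert (C ^ 3 <= C) by nra.
  assert (0 <= - (C ^ 3 - 5 * C ^ 2 - 4 * C + 2)) by nra.
  assert (0 <= (1 - C) * (- (C ^ 3 - 5 * C ^ 2 - 4 * C + 2))) by (apply Rmult_le_pos; lra).
  lra.
Qed.

Lemma polyB C : 3 / 4 <= C ^ 2 -> 0 < C -> C <= 1 ->
  2 + (8 * C ^ 3 - 6 * C) <= (1 - 3 / 4 * (1 - (2 * C ^ 2 - 1)) + C) ^ 2.
Proof.
  intros H1 H2 H3.
  assert (E : (1 - 3 / 4 * (1 - (2 * C ^ 2 - 1)) + C) ^ 2 - (2 + (8 * C ^ 3 - 6 * C)) =
     (1 - C) * (- (9/4 * C ^ 3 - 11/4 * C ^ 2 - 13/4 * C + 7/4))) by field.
  assert (C ^ 3 <= C) by nra.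
  assert (0 <= - (9/4 * C ^ 3 - 11/4 * C ^ 2 - 13/4 * C + 7/4)) by nra.
  assert (0 <= (1 - C) * (- (9/4 * C ^ 3 - 11/4 * C ^ 2 - 13/4 * C + 7/4))) by (apply Rmult_le_pos; lra).
  lra.
Qed.

Lemma ge_cc_of c2v b e : 0 <= b -> c2v <= b ^ 2 -> b <= e -> sqrt c2v <= e.
Proof. intros Hb Hc He. apply Rle_trans with b; auto. apply sqrt_le_of_sq; auto. Qed.

Section MG1.
Variables l m n : nat.
Hypothesis Hl : (1 <= l)%nat.
Hypothesis Hm : (2 <= m)%nat.
Hypothesis Hnm : n = ((2 * l + 1) * m)%nat.

Let Hn6 : (6 <= n)%nat. Proof. subst n. nia. Qed.
Let Hn : (0 < n)%nat. Proof. lia. Qed.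
Let Hn' : 0 < INR n. Proof. apply INR_n_pos; lia. Qed.

Let th_half_pos : 0 < th n / 2. Proof. pose proof (th_pos n Hn6). lra. Qed.

Lemma dotv_zz f a : dotv (zz n f) a = (1 - f) * cos (- a) + f * cos (th n - a).
Proof. unfold zz. rewrite dotv_comb, !dotv_vert by auto. simpl. f_equal; f_equal; f_equal; ring. Qed.

Lemma edge_pt u (j : Z) : IZR j <= u <= IZR j + 1 -> pt n (u / INR n) = comb (u - IZR j) (vert n j) (vert n (j + 1)).
Proof. intros H. apply pt_edge; auto. lra. field. lra. Qed.

Lemma MG1_edge0 f t : 0 <= f < 1 -> 0 < t <= 1 / 2 ->
  sqrt (HH n f (f + INR n * t)) < cc l m n ->
  forall s, 0 <= s < t -> HH n f (f + INR n * s) < HH n f (f + INR n * t).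
Proof.
  intros Hf Ht Hlt s Hs.
  pose proof (Chalf_bound n Hn6) as [HC1 HC2]. set (C := cos (th n / 2)) in *.
  pose proof (cos_th_C n) as HcosC. fold C in HcosC.
  assert (HC3 : C <= 1) by (unfold C; apply COS_bound).
  assert (Hns : INR n * s < INR n * t) by (apply Rmult_lt_compat_l; lra).
  assert (Hns0 : 0 <= INR n * s) by nra.
  assert (Hd : forall K : nat, (forall j : nat, (1 <= j)%nat -> (j < K)%nat -> condE n f (Z.of_nat j)) ->
           f + INR n * t <= INR K -> HH n f (f + INR n * s) < HH n f (f + INR n * t)).
  { intros K HK HuK. apply (HH_mono n Hn6 f K); auto; lra. }
  assert (Far : forall (j : Z) b, IZR j <= f + INR n * t <= IZR j + 1 -> 0 <= b -> c2 l m n <= b ^ 2 ->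
            b <= edist (zz n f) (comb (f + INR n * t - IZR j) (vert n j) (vert n (j + 1))) -> False).
  { intros j b Hj Hb Hb2 Hbe. unfold HH in Hlt. rewrite (edge_pt _ j) in Hlt by auto.
    rewrite <- edist_sqd in Hlt. unfold cc in Hlt. pose proof (ge_cc_of _ _ _ Hb Hb2 Hbe). lra. }
  set (u := f + INR n * t) in *.
  assert (Hu : u <= f + INR n / 2) by (unfold u; assert (INR n * t <= INR n * (1/2)) by (apply Rmult_le_compat_l; lra); lra).
  destruct (Nat.Even_or_Odd m) as [[q Hq]|[q Hq]].
  -
    set (N := ((2 * l + 1) * q)%nat).
    assert (HnN : n = (2 * N)%nat) by (unfold N; subst n m; ring).
    assert (HNr : INR n = 2 * INR N) by (rewrite HnN, mult_INR; simpl; ring).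
    assert (HNth : INR N * th n = PI) by (unfold th; rewrite HNr; field; pose proof (pos_INR N); lra).
    destruct (Rle_dec u (INR N)) as [E|E].
    + apply (Hd N); auto. intros j Hj1 Hj2. apply condE_std; auto. lra. lia.
    + exfalso. apply (Far (Z.of_nat N) (2 * C)); rewrite <- ?INR_IZR_INZ; try lra.
      * pose proof (c2_le_k l m n Hl Hm Hnm 2 Hm) as H2. replace (INR 2 * (th n / 2)) with (th n) in H2 by (simpl; field).
        lra.
      * eapply Rle_trans; [|apply edist_dotv with (a := th n / 2)].
        rewrite dotv_zz, dotv_comb, !dotv_vert by auto. rewrite plus_IZR, <- INR_IZR_INZ.
        replace (INR N * th n - th n / 2) with (PI - th n / 2) by lra.
        replace ((INR N + IZR 1) * th n - th n / 2) with (th n / 2 + PI) by (simpl; lra).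
        replace (- (th n / 2)) with (- (th n / 2)) by ring. rewrite cos_neg.
        replace (th n - th n / 2) with (th n / 2) by field.
        rewrite Rtrigo_facts.cos_pi_minus, neg_cos. fold C. lra.
  -
    assert (Hq1 : (1 <= q)%nat) by lia.
    set (J := ((2 * l + 1) * q + l)%nat).
    assert (HnJ : n = (2 * J + 1)%nat) by (unfold J; subst n m; ring).
    assert (HJr : INR n = 2 * INR J + 1) by (rewrite HnJ, plus_INR, mult_INR; simpl; ring).
    assert (HJth : INR J * th n = PI - th n / 2) by (unfold th; rewrite HJr; field; pose proof (pos_INR J); lra).
    assert (Hm3 : (3 <= m)%nat) by lia.
    pose proof (c2_le_k l m n Hl Hm Hnm 3 Hm3) as H3. replace (INR 3 * (th n / 2)) with (3 * (th n / 2)) in H3 by (simpl; ring).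
    rewrite cos_3half in H3. fold C in H3.
    assert (FarJ1 : u > INR J + 1 -> u - (INR J + 1) <= 1 / 2 -> False).
    { intros E1 E2. apply (Far (Z.of_nat J + 1)%Z (C + C ^ 2)); rewrite ?plus_IZR, <- ?INR_IZR_INZ; try (simpl; lra).
      - pose proof (polyA C HC1 HC2 HC3). lra.
      - eapply Rle_trans; [|apply edist_dotv with (a := th n / 2)].
        rewrite dotv_zz, dotv_comb, !dotv_vert by auto. rewrite !plus_IZR, <- INR_IZR_INZ.
        replace ((INR J + IZR 1) * th n - th n / 2) with PI by (simpl; lra).
        replace ((INR J + IZR 1 + IZR 1) * th n - th n / 2) with (th n + PI) by (simpl; lra).
        rewrite cos_neg. replace (th n - th n / 2) with (th n / 2) by field.
        rewrite neg_cos, cos_PI. fold C. rewrite HcosC.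
        replace (IZR 1) with 1 in * by auto.
        assert (Hg0 : 0 <= u - (INR J + 1)) by lra. set (g := u - (INR J + 1)) in *.
        assert (g * (1 - C ^ 2) <= 1 / 2 * (1 - C ^ 2)) by (apply Rmult_le_compat_r; nra). nra. }
    destruct (Rle_dec (3 / 4) f) as [Ef|Ef].
    + destruct (Rle_dec u (INR J + 1)) as [E|E].
      * apply (Hd (S J)); [|rewrite S_INR; lra]. intros j Hj1 Hj2.
        destruct (Nat.eq_dec j J) as [->|Hne].
        -- unfold condE. rewrite (condE_diff n Hn6). rewrite <- INR_IZR_INZ.
           rewrite HJth. replace ((INR J + 1) * th n) with (th n / 2 + PI) by lra.
           replace ((INR J - 1) * th n) with (PI - 3 * (th n / 2)) by lra.
           rewrite neg_cos, !Rtrigo_facts.cos_pi_minus, cos_3half. fold C. rewrite HcosC.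
           apply Rle_ge. assert (C >= 2 / 3) by nra. assert (f * C >= 3 / 4 * C) by nra.
           assert (0 <= (1 - C ^ 2) * (8 * (f * C) - 4)) by (apply Rmult_le_pos; nra). nra.
        -- apply condE_std; auto. lra. lia.
      * exfalso. apply FarJ1; lra.
    + destruct (Rle_dec u (INR J)) as [E|E].
      * apply (Hd J); auto. intros j Hj1 Hj2. apply condE_std; auto. lra. lia.
      * exfalso. destruct (Rle_dec u (INR J + 1)) as [E2|E2].
        -- assert (B1 : 0 <= 1 - 3 / 4 * (1 - (2 * C ^ 2 - 1)) + C) by nra.
           assert (B2 : c2 l m n <= (1 - 3 / 4 * (1 - (2 * C ^ 2 - 1)) + C) ^ 2) by (pose proof (polyB C HC1 HC2 HC3); lra).
           assert (B3 : 1 - 3 / 4 * (1 - (2 * C ^ 2 - 1)) + C <= edist (zz n f) (comb (u - IZR (Z.of_nat J)) (vert n (Z.of_nat J)) (vert n (Z.of_nat J + 1)))).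
           { eapply Rle_trans; [|apply edist_dotv with (a := 0)].
              rewrite dotv_zz, dotv_comb, !dotv_vert by auto. rewrite plus_IZR, <- INR_IZR_INZ.
              rewrite !Rminus_0_r, Ropp_0, cos_0. rewrite HJth.
              replace ((INR J + IZR 1) * th n) with (th n / 2 + PI) by (simpl; lra).
              rewrite neg_cos, Rtrigo_facts.cos_pi_minus. fold C. rewrite HcosC.
              assert (0 <= 1 - (2 * C ^ 2 - 1)) by nra. nra. }
           apply (Far (Z.of_nat J) _ ltac:(rewrite <- INR_IZR_INZ; lra) B1 B2 B3).
        -- apply FarJ1; lra.
Qed.

Lemma MG1 x t : 0 < t <= 1 / 2 -> DD n x (x + t) < cc l m n ->
  forall s, 0 <= s < t -> DD n x (x + s) < DD n x (x + t).
Proof.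
  intros Ht Hlt s Hs. destruct (reduce0 l m n Hl Hm Hnm x) as [x0 [Hx0 [HD _]]]. rewrite !HD in *.
  rewrite !(DD_HH l m n Hl Hm Hnm) in * by auto.
  assert (Hf : 0 <= INR n * x0 < 1).
  { split. nra. destruct Hx0 as [_ Hx]. apply Rmult_lt_compat_l with (r := INR n) in Hx; auto.
    rewrite Rinv_r in Hx by lra. lra. }
  apply sqrt_lt_1_alt. split. unfold HH. apply sqd_nonneg.
  apply MG1_edge0; auto.
Qed.

End MG1.


Lemma dP_range a b : 0 <= dP a b < 1.
Proof. apply frac_range. Qed.

Lemma dP_lift a b : exists k, b = a + dP a b + IZR k.
Proof. unfold dP. destruct (frac_int_diff (b - a)) as [k Hk]. exists k. lra. Qed.

Lemma int_small k : -1 < IZR k < 1 -> k = 0%Z.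
Proof. intros [H1 H2]. apply lt_IZR in H1. apply lt_IZR in H2. lia. Qed.

Lemma dP_zero a b : inP a -> inP b -> dP a b = 0 -> a = b.
Proof.
  intros Ha Hb H. destruct (dP_lift a b) as [k Hk]. rewrite H in Hk. unfold inP in *.
  assert (k = 0%Z) by (apply int_small; lra). subst k. simpl in Hk. lra.
Qed.

Lemma dP_self a : dP a a = 0.
Proof. unfold dP. rewrite Rminus_diag. apply frac_in. lra. Qed.

Lemma dP_swap a b : inP a -> inP b -> a <> b -> dP b a = 1 - dP a b.
Proof.
  intros Ha Hb Hab. destruct (dP_lift a b) as [k Hk].
  assert (H0 : dP a b <> 0) by (intro E; apply Hab; apply dP_zero; auto).
  pose proof (dP_range a b). unfold dP at 1. apply (frac_spec _ (- k - 1)).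
  lra. rewrite minus_IZR, opp_IZR. simpl. lra.
Qed.

Lemma dP_of_lift a b t k : 0 <= t < 1 -> b = a + t + IZR k -> dP a b = t.
Proof. intros Ht Hb. unfold dP. apply (frac_spec _ k); auto. lra. Qed.

Lemma DD_lift n a b : (0 < n)%nat -> DD n a b = DD n a (a + dP a b).
Proof.
  intros Hn. destruct (dP_lift a b) as [k Hk]. rewrite Hk at 1.
  rewrite <- (D_per n a (a + dP a b) 0 k Hn). f_equal. simpl. ring.
Qed.

Section Cyc.
Variables l m n : nat.
Hypothesis Hl : (1 <= l)%nat.
Hypothesis Hm : (2 <= m)%nat.
Hypothesis Hnm : n = ((2 * l + 1) * m)%nat.

Let Hn6 : (6 <= n)%nat. Proof. subst n. nia. Qed.
Let Hn : (0 < n)%nat. Proof. lia. Qed.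
Let Hn' : 0 < INR n. Proof. apply INR_n_pos; lia. Qed.

Lemma arrow_facts r u w : inP u -> inP w -> arrow n r u w ->
  0 < dP u w <= 1 / 2 /\ DD n u (u + dP u w) < r.
Proof.
  intros Hu Hw [Hne [Hd Hle]]. rewrite (dP_swap u w) in Hle by auto.
  assert (dP u w <> 0) by (intro E; apply Hne; apply dP_zero; auto).
  pose proof (dP_range u w) as [R1 R2].
  assert (0 < dP u w) by (destruct R1 as [|E]; [auto| exfalso; apply H; auto]).
  split. lra. rewrite <- DD_lift by auto. exact Hd.
Qed.

Lemma cyc_below_cc r : 0 < r < cc l m n -> cyclicVR n r.
Proof.
  intros Hr u0 u1 Hu0 Hu1 Harr w Hw Hsw.
  destruct (arrow_facts r u0 u1 Hu0 Hu1 Harr) as [Ht Hd].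
  set (t := dP u0 u1) in *. set (sw := dP u0 w) in *.
  assert (Hne0 : u0 <> w) by (intro E; subst w; unfold sw in Hsw; rewrite dP_self in Hsw; lra).
  assert (Hne1 : w <> u1) by (intro E; subst w; unfold sw, t in *; lra).
  destruct (dP_lift u0 w) as [kw Hkw]. destruct (dP_lift u0 u1) as [k1 Hk1]. fold sw t in Hkw, Hk1.
  assert (Hdt : DD n u0 (u0 + t) < cc l m n) by lra.
  split.
  - split; [auto|split].
    + change (DD n u0 w < r). rewrite DD_lift by auto. fold sw.
      pose proof (MG1 l m n Hl Hm Hnm u0 t ltac:(lra) Hdt sw ltac:(lra)). lra.
    + rewrite (dP_swap u0 w) by auto. fold sw. lra.
  - assert (Hwu1 : dP w u1 = t - sw) by (apply (dP_of_lift _ _ _ (k1 - kw)); [lra| rewrite minus_IZR; lra]).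
    split; [auto|split].
    + change (DD n w u1 < r).
      rewrite <- (D_neg n w u1 Hn).
      (* -w = -u1 + (t - sw) + int, -u0 = -u1 + t + int *)
      assert (E1 : DD n (- w) (- u1) = DD n (- u1) (- u1 + (t - sw))).
      { rewrite D_sym. rewrite <- (D_per n (- u1) (- u1 + (t - sw)) 0 (k1 - kw) Hn). f_equal.
        simpl. ring. rewrite minus_IZR. lra. }
      assert (E2 : DD n (- u1) (- u1 + t) = DD n u0 (u0 + t)).
      { transitivity (DD n (- (u0 + t) + IZR (- k1)) (- u0 + IZR (- k1))).
        f_equal; rewrite opp_IZR; lra.
        rewrite D_per by auto. rewrite D_neg by auto. apply D_sym. }
      rewrite E1. assert (Hlt : DD n (- u1) (- u1 + t) < cc l m n) by lra.
      pose proof (MG1 l m n Hl Hm Hnm (- u1) t ltac:(lra) Hlt (t - sw) ltac:(lra)). lra.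
    + rewrite (dP_swap w u1) by auto. lra.
Qed.

Definition m0 := / (2 * INR n).
Definition y0 := / (2 * INR n) + / 2.
Definition w0 := / INR n.
Definition Bv := DD n m0 y0.
Definition Wv := DD n w0 y0.

Definition dotp (p q : R * R) := fst p * fst q + snd p * snd q.

Lemma dot_vert a b : dotp (vert n a) (vert n b) = cos ((IZR b - IZR a) * th n).
Proof. rewrite !vert_eq by auto. unfold dotp; simpl.
  replace ((IZR b - IZR a) * th n) with (IZR b * th n - IZR a * th n) by ring. rewrite cos_minus. ring. Qed.

Lemma pt_y0_perp : dotp (pt n y0) (vert n 1) = dotp (pt n y0) (vert n 0).
Proof.
  destruct (Nat.Even_or_Odd m) as [[q Hq]|[q Hq]].
  - set (N := ((2 * l + 1) * q)%nat).
    assert (HnN : n = (2 * N)%nat) by (unfold N; subst n m; ring).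
    assert (HNr : INR n = 2 * INR N) by (rewrite HnN, mult_INR; simpl; ring).
    assert (HNth : INR N * th n = PI) by (unfold th; rewrite HNr; field; pose proof (pos_INR N); lra).
    rewrite (pt_edge n y0 (Z.of_nat N) (1/2)) by (auto; try lra; unfold y0; rewrite <- INR_IZR_INZ, HNr; field; pose proof (pos_INR N); lra).
    unfold dotp, comb; simpl. fold (dotp (vert n (Z.of_nat N)) (vert n 1)). 
    assert (G : forall p q r : R * R, fst (comb (1/2) p q) * fst r + snd (comb (1/2) p q) * snd r = 1/2 * dotp p r + 1/2 * dotp q r)
      by (intros; unfold comb, dotp; simpl; field).
    change (fst (comb (1/2) (vert n (Z.of_nat N)) (vert n (Z.of_nat N + 1))) * fst (vert n 1) + snd (comb (1/2) (vert n (Z.of_nat N)) (vert n (Z.of_nat N + 1))) * snd (vert n 1) =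
            fst (comb (1/2) (vert n (Z.of_nat N)) (vert n (Z.of_nat N + 1))) * fst (vert n 0) + snd (comb (1/2) (vert n (Z.of_nat N)) (vert n (Z.of_nat N + 1))) * snd (vert n 0)).
    rewrite !G, !dot_vert. rewrite plus_IZR, <- INR_IZR_INZ. simpl.
    replace ((1 - INR N) * th n) with (th n - PI) by lra.
    replace ((1 - (INR N + 1)) * th n) with (- PI) by lra.
    replace ((0 - INR N) * th n) with (- PI) by lra.
    replace ((0 - (INR N + 1)) * th n) with (- (th n + PI)) by lra.
    rewrite cos_neg, cos_neg, neg_cos. replace (th n - PI) with (- (PI - th n)) by ring.
    rewrite cos_neg, Rtrigo_facts.cos_pi_minus. ring.
  - set (J := ((2 * l + 1) * q + l)%nat).
    assert (HnJ : n = (2 * J + 1)%nat) by (unfold J; subst n m; ring).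
    assert (HJr : INR n = 2 * INR J + 1) by (rewrite HnJ, plus_INR, mult_INR; simpl; ring).
    assert (HJth : INR J * th n = PI - th n / 2) by (unfold th; rewrite HJr; field; pose proof (pos_INR J); lra).
    rewrite (pt_edge n y0 (Z.of_nat J + 1) 0) by (auto; try lra; unfold y0; rewrite plus_IZR, <- INR_IZR_INZ, HJr; simpl; field; pose proof (pos_INR J); lra).
    assert (G : forall p q r : R * R, fst (comb 0 p q) * fst r + snd (comb 0 p q) * snd r = dotp p r)
      by (intros; unfold comb, dotp; simpl; ring).
    unfold dotp. rewrite !G, !dot_vert. rewrite plus_IZR, <- INR_IZR_INZ. simpl.
    replace ((1 - (INR J + 1)) * th n) with (- (PI - th n / 2)) by lra.
    replace ((0 - (INR J + 1)) * th n) with (- (th n / 2 + PI)) by lra.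
    rewrite !cos_neg, neg_cos, Rtrigo_facts.cos_pi_minus. ring.
Qed.

Lemma sqd_expand p q r : sqd p r = sqd p q + sqd q r + 2 * ((fst p - fst q) * (fst q - fst r) + (snd p - snd q) * (snd q - snd r)).
Proof. unfold sqd. ring. Qed.

Lemma pt_edge0 g : 0 <= g <= 1 -> pt n (g / INR n) = comb g (vert n 0) (vert n 1).
Proof. intros Hg. apply pt_edge; auto. simpl. field. lra. Qed.

Lemma edge0_perp g : sqd (comb g (vert n 0) (vert n 1)) (pt n y0) =
  (g - 1/2) ^ 2 * sqd (vert n 0) (vert n 1) + sqd (comb (1/2) (vert n 0) (vert n 1)) (pt n y0).
Proof.
  rewrite (sqd_expand _ (comb (1/2) (vert n 0) (vert n 1))). rewrite sqd_same_edge.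
  pose proof pt_y0_perp as HP. unfold dotp in HP.
  assert (N0 : fst (vert n 0) ^ 2 + snd (vert n 0) ^ 2 = 1) by (pose proof (sqd_origin_vert n 0 Hn); unfold sqd in H; cbn [fst snd] in H; rewrite !Rminus_0_r in H; lra).
  assert (N1 : fst (vert n 1) ^ 2 + snd (vert n 1) ^ 2 = 1) by (pose proof (sqd_origin_vert n 1 Hn); unfold sqd in H; cbn [fst snd] in H; rewrite !Rminus_0_r in H; lra).
  unfold comb; cbn [fst snd].
  replace ((1 - g) * fst (vert n 0) + g * fst (vert n 1) - ((1 - 1 / 2) * fst (vert n 0) + 1 / 2 * fst (vert n 1))) with ((1/2 - g) * (fst (vert n 0) - fst (vert n 1))) by field.
  replace ((1 - g) * snd (vert n 0) + g * snd (vert n 1) - ((1 - 1 / 2) * snd (vert n 0) + 1 / 2 * snd (vert n 1))) with ((1/2 - g) * (snd (vert n 0) - snd (vert n 1))) by field.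
  replace ((1 / 2 - g) ^ 2) with ((g - 1/2) ^ 2) by ring.
  transitivity ((g - 1 / 2) ^ 2 * sqd (vert n 0) (vert n 1) + sqd (comb (1 / 2) (vert n 0) (vert n 1)) (pt n y0) +
     2 * (1/2 - g) * ((fst (vert n 0) - fst (vert n 1)) * ((1 - 1/2) * fst (vert n 0) + 1/2 * fst (vert n 1)) + (snd (vert n 0) - snd (vert n 1)) * ((1 - 1/2) * snd (vert n 0) + 1/2 * snd (vert n 1)))
     - 2 * (1/2 - g) * ((fst (vert n 0) - fst (vert n 1)) * fst (pt n y0) + (snd (vert n 0) - snd (vert n 1)) * snd (pt n y0))).
  - unfold comb; cbn [fst snd]. ring.
  - assert (Z1 : (fst (vert n 0) - fst (vert n 1)) * ((1 - 1/2) * fst (vert n 0) + 1/2 * fst (vert n 1)) + (snd (vert n 0) - snd (vert n 1)) * ((1 - 1/2) * snd (vert n 0) + 1/2 * snd (vert n 1)) = 0).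
    { transitivity (1/2 * ((fst (vert n 0) ^ 2 + snd (vert n 0) ^ 2) - (fst (vert n 1) ^ 2 + snd (vert n 1) ^ 2))).
      field. rewrite N0, N1. ring. }
    assert (Z2 : (fst (vert n 0) - fst (vert n 1)) * fst (pt n y0) + (snd (vert n 0) - snd (vert n 1)) * snd (pt n y0) = 0) by lra.
    rewrite Z1, Z2. unfold comb. ring.
Qed.

Lemma Bv_sq : sqd (pt n m0) (pt n y0) = sqd (comb (1/2) (vert n 0) (vert n 1)) (pt n y0).
Proof. unfold m0. replace (/ (2 * INR n)) with ((1/2) / INR n) by (field; lra). rewrite pt_edge0 by lra. auto. Qed.

Lemma Wv_gt_Bv : Bv < Wv.
Proof.
  unfold Bv, Wv, DD. apply edist_lt_iff. rewrite Bv_sq.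
  unfold w0. replace (/ INR n) with (1 / INR n) by (field; lra). rewrite pt_edge0 by lra.
  rewrite (edge0_perp 1). pose proof (s2_pos n Hn6). nra.
Qed.

Lemma far_point x : exists y, Bv <= DD n x y.
Proof.
  destruct (reduce0 l m n Hl Hm Hnm x) as [x0 [Hx0 [HD Hf]]].
  exists (x + (y0 - x0)). rewrite HD. replace (x0 + (y0 - x0)) with y0 by ring.
  unfold Bv, DD. apply edist_le_iff. rewrite Bv_sq.
  replace x0 with ((INR n * x0) / INR n) by (field; lra).
  assert (Hf1 : 0 <= INR n * x0 <= 1).
  { split. nra. destruct Hx0 as [_ Hx]. apply Rmult_lt_compat_l with (r := INR n) in Hx; auto.
    rewrite Rinv_r in Hx by lra. lra. }
  rewrite pt_edge0 by auto. rewrite (edge0_perp (INR n * x0)). pose proof (sqd_nonneg (vert n 0) (vert n 1)).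
  pose proof (pow2_ge_0 (INR n * x0 - 1/2)). nra.
Qed.

Lemma not_cyc r : Bv < r <= Wv -> ~ cyclicVR n r.
Proof.
  intros Hr Hc.
  assert (H6 : 6 <= INR n) by (replace 6 with (INR 6) by (simpl; ring); apply le_INR; auto).
  assert (Hn2 : 0 < / (2 * INR n) < / INR n /\ / INR n < 1 / 2).
  { split. split. apply Rinv_0_lt_compat; lra. apply Rinv_lt_contravar; nra.
    replace (1/2) with (/ 2) by field. apply Rinv_lt_contravar; lra. }
  assert (Hu0 : inP m0) by (unfold inP, m0; lra).
  assert (Hu1 : inP y0) by (unfold inP, y0; lra).
  assert (Hw : inP w0) by (unfold inP, w0; lra).
  assert (Hd01 : dP m0 y0 = 1/2).
  { unfold dP, m0, y0. replace (/ (2 * INR n) + / 2 - / (2 * INR n)) with (1/2) by (field; lra). apply frac_in; lra. }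
  assert (Hd10 : dP y0 m0 = 1/2) by (unfold dP, m0, y0; apply (frac_spec _ (-1)); [lra| simpl; field; lra]).
  assert (Harr : arrow n r m0 y0).
  { split. unfold m0, y0. lra. split. change (Bv < r). lra. lra. }
  assert (Hdw : dP m0 w0 = / (2 * INR n)).
  { unfold dP, m0, w0. replace (/ INR n - / (2 * INR n)) with (/ (2 * INR n)) by (field; lra). apply frac_in; lra. }
  destruct (Hc m0 y0 Hu0 Hu1 Harr w0 Hw) as [_ [_ [Hlt _]]].
  - rewrite Hdw, Hd01. lra.
  - change (Wv < r) in Hlt. lra.
Qed.

Definition Sset := fun r => 0 <= r /\ forall r', 0 < r' < r -> cyclicVR n r'.

Lemma Sset_ub r : Sset r -> r <= Bv.
Proof.
  intros [H0 H]. destruct (Rle_dec r Bv) as [|E]; auto. exfalso.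
  pose proof Wv_gt_Bv. set (r' := (Bv + Rmin r Wv) / 2).
  assert (Bv < r' <= Wv) by (unfold r'; pose proof (Rmin_l r Wv); pose proof (Rmin_r r Wv);
    assert (Bv < Rmin r Wv) by (apply Rmin_glb_lt; lra); lra).
  apply (not_cyc r'); auto. apply H. split.
  - pose proof (edist_nonneg (pt n m0) (pt n y0)). fold (DD n m0 y0) in H3. fold Bv in H3. lra.
  - unfold r'. pose proof (Rmin_l r Wv). assert (Bv < r) by lra. lra.
Qed.

Lemma Sset_cc : Sset (cc l m n).
Proof. split. pose proof (cc_pos l m n Hl Hm Hnm); lra. intros r' Hr'. apply cyc_below_cc. lra. Qed.

Lemma rn_finite : Lub_Rbar Sset = Finite (rn n).
Proof.
  pose proof (Lub_Rbar_correct Sset) as [Hub Hlub].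
  assert (H1 : Rbar_le (Lub_Rbar Sset) Bv) by (apply Hlub; intros x Hx; simpl; apply Sset_ub; auto).
  assert (H2 : Rbar_le (cc l m n) (Lub_Rbar Sset)) by (apply Hub; apply Sset_cc).
  unfold rn. fold Sset. destruct (Lub_Rbar Sset); simpl in *; try contradiction; auto.
Qed.

Lemma rn_ge_cc : cc l m n <= rn n.
Proof.
  pose proof (Lub_Rbar_correct Sset) as [Hub _]. pose proof (Hub _ Sset_cc). rewrite rn_finite in H. simpl in H. auto.
Qed.

Lemma rn_le_Bv : rn n <= Bv.
Proof.
  pose proof (Lub_Rbar_correct Sset) as [_ Hlub].
  assert (H1 : Rbar_le (Lub_Rbar Sset) Bv) by (apply Hlub; intros x Hx; simpl; apply Sset_ub; auto).
  rewrite rn_finite in H1. simpl in H1. auto.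
Qed.

Lemma rn_pos : 0 < rn n.
Proof. pose proof rn_ge_cc. pose proof (cc_pos l m n Hl Hm Hnm). lra. Qed.

Lemma cyc_below r : 0 < r < rn n -> cyclicVR n r.
Proof.
  intros Hr. destruct (classic (cyclicVR n r)) as [|Hnc]; auto. exfalso.
  pose proof (Lub_Rbar_correct Sset) as [_ Hlub].
  assert (Hub : Rbar_le (Lub_Rbar Sset) r).
  { apply Hlub. intros x [Hx0 Hx]. simpl. destruct (Rle_dec x r) as [|E]; auto.
    exfalso. apply Hnc. apply Hx. lra. }
  rewrite rn_finite in Hub. simpl in Hub. lra.
Qed.

Lemma far_rn x : exists y, rn n <= DD n x y.
Proof. destruct (far_point x) as [y Hy]. exists y. pose proof rn_le_Bv. lra. Qed.

End Cyc.


Lemma dP_frac a b : dP (frac_part a) (frac_part b) = frac_part (b - a).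
Proof.
  unfold dP. destruct (frac_int_diff a) as [ka Ha]. destruct (frac_int_diff b) as [kb Hb].
  replace (frac_part b - frac_part a) with ((b - a) + IZR (ka - kb)) by (rewrite minus_IZR; lra).
  apply frac_add_int.
Qed.

Lemma frac_inP a : inP (frac_part a).
Proof. unfold inP. apply frac_range. Qed.

Lemma edist_frac n a b : (0 < n)%nat -> edist (pt n (frac_part a)) (pt n (frac_part b)) = DD n a b.
Proof. intros Hn. apply D_frac. auto. Qed.

Section Off.
Variables l m n : nat.
Hypothesis Hl : (1 <= l)%nat.
Hypothesis Hm : (2 <= m)%nat.
Hypothesis Hnm : n = ((2 * l + 1) * m)%nat.

Let Hn6 : (6 <= n)%nat. Proof. subst n. nia. Qed.
Let Hn : (0 < n)%nat. Proof. lia. Qed.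
Let Hn' : 0 < INR n. Proof. apply INR_n_pos; lia. Qed.

Definition Aset (r x : R) := fun t => 0 < t < 1 /\ edist (pt n x) (pt n (x + t)) = r.

Lemma exists_far r x : 0 < r < rn n -> exists t, 0 < t <= 1 / 2 /\ r <= phi n x t.
Proof.
  intros Hr. destruct (classic (exists t, 0 < t <= 1 / 2 /\ r <= phi n x t)) as [|Hno]; auto. exfalso.
  assert (Hall : forall t, 0 < t <= 1/2 -> phi n x t < r).
  { intros t Ht. destruct (Rlt_le_dec (phi n x t) r); auto. exfalso. apply Hno. exists t. auto. }
  pose proof (cyc_below l m n Hl Hm Hnm r Hr) as Hc.
  set (u0 := frac_part (x + 1/2)). set (u1 := frac_part x).
  assert (Hd01 : dP u0 u1 = 1/2).
  { unfold u0, u1. rewrite dP_frac. apply (frac_spec _ (-1)). lra. simpl. lra. }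
  assert (Hd10 : dP u1 u0 = 1/2).
  { unfold u0, u1. rewrite dP_frac. replace (x + 1 / 2 - x) with (1/2) by ring. apply frac_in. lra. }
  assert (Hne : u0 <> u1) by (intro E; rewrite E, dP_self in Hd01; lra).
  assert (Harr : arrow n r u0 u1).
  { split; auto. split.
    - unfold u0, u1. rewrite edist_frac by auto. rewrite D_sym. apply Hall. lra.
    - lra. }
  assert (Hall2 : forall t, 0 < t < 1 -> phi n x t < r).
  { intros t Ht. destruct (Rle_dec t (1/2)) as [E|E]. apply Hall; lra.
    set (w := frac_part (x + t)).
    assert (Hdw : dP u0 w = t - 1/2) by (unfold u0, w; rewrite dP_frac; replace (x + t - (x + 1/2)) with (t - 1/2) by ring; apply frac_in; lra).
    destruct (Hc u0 u1 (frac_inP _) (frac_inP _) Harr w (frac_inP _)) as [_ [_ [Hlt _]]].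
    rewrite Hdw, Hd01. lra.
    unfold w, u1 in Hlt. rewrite edist_frac in Hlt by auto. rewrite D_sym in Hlt. exact Hlt. }
  destruct (far_rn l m n Hl Hm Hnm x) as [y Hy].
  rewrite (DD_lift n x y Hn) in Hy. pose proof (dP_range x y) as [R1 R2].
  destruct R1 as [R1|R1].
  - assert (phi n x (dP x y) < r) by (apply Hall2; lra). unfold phi in H. lra.
  - rewrite <- R1 in Hy. rewrite Rplus_0_r in Hy. unfold DD in Hy. rewrite edist_sqd in Hy.
    unfold sqd in Hy. replace ((fst (pt n x) - fst (pt n x)) ^ 2 + (snd (pt n x) - snd (pt n x)) ^ 2) with 0 in Hy by ring.
    rewrite sqrt_0 in Hy. lra.
Qed.

Lemma exists_hit r x : 0 < r < rn n -> exists t, 0 < t <= 1 / 2 /\ phi n x t = r.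
Proof.
  intros Hr. destruct (exists_far r x Hr) as [t0 [Ht0 H0]].
  destruct H0 as [H0|H0].
  - destruct (ivt_up (phi n x) 0 t0 r (phi_cont n x Hn)) as [t [Ht Hpt]]; try lra.
    rewrite phi_0. lra. exists t. split; auto. lra.
  - exists t0. auto.
Qed.

Lemma glb_props r x : 0 < r < rn n ->
  let g := off0 n r x in
  0 < g <= 1 / 2 /\ phi n x g = r /\ (forall s, 0 <= s < g -> phi n x s < r) /\
  (forall t, 0 < t < 1 -> phi n x t = r -> g <= t).
Proof.
  intros Hr g. destruct (exists_hit r x Hr) as [t1 [Ht1 Hp1]].
  pose proof (Glb_Rbar_correct (Aset r x)) as [Hlb Hglb].
  assert (HA : forall t, Aset r x t <-> 0 < t < 1 /\ phi n x t = r) by (intros; unfold Aset, phi, DD; tauto).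
  assert (Hg1 : Rbar_le (Glb_Rbar (Aset r x)) t1) by (apply Hlb; apply HA; split; [lra|auto]).
  assert (Hg0 : Rbar_le 0 (Glb_Rbar (Aset r x))) by (apply Hglb; intros t Ht; apply HA in Ht; destruct Ht as [[Ht1_ Ht2_] _]; simpl; lra).
  assert (Hgdef : Glb_Rbar (Aset r x) = Finite g).
  { unfold g, off0. fold (Aset r x). destruct (Glb_Rbar (Aset r x)); simpl in *; try contradiction; auto. }
  rewrite Hgdef in Hg1, Hg0, Hlb, Hglb. simpl in Hg1, Hg0.
  assert (Hmin : forall t, 0 < t < 1 -> phi n x t = r -> g <= t).
  { intros t Ht Hpt. assert (Aset r x t) by (apply HA; auto). apply Hlb in H. simpl in H. auto. }
  assert (Hbefore : forall s, 0 < s < g -> phi n x s < r).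
  { intros s Hs. destruct (Rlt_le_dec (phi n x s) r) as [|E]; auto. exfalso.
    destruct E as [E|E].
    - destruct (ivt_up (phi n x) 0 s r (phi_cont n x Hn)) as [t [Ht Hpt]]; try lra.
      rewrite phi_0. lra. pose proof (Hmin t ltac:(lra) Hpt). lra.
    - pose proof (Hmin s ltac:(lra) (eq_sym E)). lra. }
  assert (Hlip := phi_lip n x).
  assert (Hginv : / INR n > 0) by (apply Rinv_0_lt_compat; lra).
  assert (Hpg : phi n x g = r).
  { destruct (Rtotal_order (phi n x g) r) as [E|[E|E]]; auto; exfalso.
    - (* phi g < r: points of A arbitrarily close above g *)
      set (d := Rmin (/ INR n) ((r - phi n x g) / (4 * INR n))).
      assert (Hd : 0 < d) by (apply Rmin_pos; auto; apply Rdiv_lt_0_compat; lra).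
      assert (Hlbd : Rbar_le (g + d) g).
      { apply Hglb. intros t Ht. apply HA in Ht. destruct Ht as [Ht Hpt]. simpl.
        destruct (Rle_dec (g + d) t) as [|E2]; auto. exfalso. apply Rnot_le_lt in E2.
        assert (Hgt : g <= t) by (apply Hmin; auto; change (phi n x t = r) in Hpt; auto).
        assert (Rabs (t - g) < / INR n) by (rewrite Rabs_right by lra; pose proof (Rmin_l (/ INR n) ((r - phi n x g) / (4 * INR n))); fold d in H; lra).
        pose proof (Hlip g t Hn H) as H2. rewrite (Rabs_right (t - g)) in H2 by lra.
        assert (t - g < (r - phi n x g) / (4 * INR n)) by (pose proof (Rmin_r (/ INR n) ((r - phi n x g) / (4 * INR n))); fold d in H0; lra).
        assert (4 * INR n * (t - g) < r - phi n x g).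
        { apply Rmult_lt_compat_l with (r := 4 * INR n) in H0; [|lra].
          replace (4 * INR n * ((r - phi n x g) / (4 * INR n))) with (r - phi n x g) in H0 by (field; lra). lra. }
        apply Rabs_le_between in H2. change (phi n x t = r) in Hpt. lra. }
      simpl in Hlbd. lra.
    -
      assert (Hgpos : 0 < g) by (destruct Hg0 as [|E0]; auto; subst; rewrite <- E0 in E; rewrite phi_0 in E; lra).
      set (d := Rmin (Rmin (/ INR n) ((phi n x g - r) / (4 * INR n))) g).
      assert (Hd : 0 < d) by (apply Rmin_pos; auto; apply Rmin_pos; auto; apply Rdiv_lt_0_compat; lra).
      set (s := g - d / 2).
      assert (Hs : 0 < s < g) by (unfold s; pose proof (Rmin_r (Rmin (/ INR n) ((phi n x g - r) / (4 * INR n))) g); fold d in H; lra).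
      pose proof (Hbefore s Hs).
      assert (Hd1 : d <= / INR n) by (unfold d; eapply Rle_trans; [apply Rmin_l| apply Rmin_l]).
      assert (Hd2 : d <= (phi n x g - r) / (4 * INR n)) by (unfold d; eapply Rle_trans; [apply Rmin_l| apply Rmin_r]).
      assert (Rabs (s - g) < / INR n) by (rewrite Rabs_left by (unfold s; lra); unfold s; lra).
      pose proof (Hlip g s Hn H0) as H2. rewrite (Rabs_left (s - g)) in H2 by (unfold s; lra).
      assert (4 * INR n * (- (s - g)) < phi n x g - r).
      { unfold s. replace (- (g - d / 2 - g)) with (d / 2) by ring.
        apply Rmult_le_compat_l with (r := 4 * INR n) in Hd2; [|lra].
        replace (4 * INR n * ((phi n x g - r) / (4 * INR n))) with (phi n x g - r) in Hd2 by (field; lra). nra. }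
      apply Rabs_le_between in H2. lra. }
  assert (Hgpos : 0 < g) by (destruct Hg0 as [|E0]; auto; rewrite <- E0 in Hpg; rewrite phi_0 in Hpg; lra).
  split; [lra|]. split; auto. split; auto.
  intros s [Hs1 Hs2]. destruct Hs1 as [Hs1|Hs1]. apply Hbefore; lra. subst s. rewrite phi_0. lra.
Qed.

End Off.


Section Off2.
Variables l m n : nat.
Hypothesis Hl : (1 <= l)%nat.
Hypothesis Hm : (2 <= m)%nat.
Hypothesis Hnm : n = ((2 * l + 1) * m)%nat.

Let Hn6 : (6 <= n)%nat. Proof. subst n. nia. Qed.
Let Hn : (0 < n)%nat. Proof. lia. Qed.
Let Hn' : 0 < INR n. Proof. apply INR_n_pos; lia. Qed.

Notation GP := (glb_props l m n Hl Hm Hnm).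

Lemma off0_lt_of r x t : 0 < r < rn n -> 0 < t < 1 -> r < phi n x t -> off0 n r x < t.
Proof.
  intros Hr Ht Hp. destruct (GP r x Hr) as [_ [_ [_ Hmin]]].
  destruct (ivt_up (phi n x) 0 t r (phi_cont n x Hn)) as [t' [Ht' Hpt]]; try lra.
  rewrite phi_0. lra. pose proof (Hmin t' ltac:(lra) Hpt). lra.
Qed.

Lemma off0_ge_of r x t : 0 < r < rn n -> 0 < t -> (forall s, 0 < s <= t -> phi n x s < r) -> t < off0 n r x.
Proof.
  intros Hr Ht Hs. destruct (GP r x Hr) as [[H1 H2] [Hp _]].
  destruct (Rlt_le_dec t (off0 n r x)) as [|E]; auto. exfalso.
  pose proof (Hs (off0 n r x) ltac:(lra)). lra.
Qed.

Lemma off0_mono_r r1 r2 x : 0 < r1 -> r1 < r2 -> r2 < rn n -> off0 n r1 x < off0 n r2 x.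
Proof.
  intros H1 H2 H3. destruct (GP r2 x ltac:(lra)) as [[A1 A2] [Hp _]].
  apply off0_lt_of; try lra.
Qed.

Lemma off0_per r x k : off0 n r (x + IZR k) = off0 n r x.
Proof.
  unfold off0. f_equal. apply Glb_Rbar_eqset. intros t.
  rewrite !pt_per by auto. replace (x + IZR k + t) with ((x + t) + IZR k) by ring. rewrite pt_per by auto. tauto.
Qed.

Lemma off0_frac r x : off0 n r (frac_part x) = off0 n r x.
Proof. destruct (frac_int_diff x) as [k Hk]. rewrite Hk at 2. rewrite Rplus_comm. symmetry. apply off0_per. Qed.

Lemma Gmono r x y : 0 < r < rn n -> x <= y -> x + off0 n r x <= y + off0 n r y.
Proof.
  intros Hr Hxy. destruct (GP r x Hr) as [[X1 X2] [Xp [Xb _]]]. destruct (GP r y Hr) as [[Y1 Y2] [Yp _]].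
  destruct (Rle_dec (x + off0 n r x) y) as [E|E]. lra.
  destruct (Rle_dec (x + off0 n r x) (y + off0 n r y)) as [|E2]; auto. exfalso.
  apply Rnot_le_lt in E. apply Rnot_le_lt in E2.
  destruct (Req_dec x y) as [->|Hne]. lra.
  set (z := y + off0 n r y).
  pose proof (cyc_below l m n Hl Hm Hnm r Hr) as Hc.
  set (u0 := frac_part x). set (u1 := frac_part z). set (w := frac_part y).
  assert (Hd01 : dP u0 u1 = z - x) by (unfold u0, u1; rewrite dP_frac; apply frac_in; unfold z; lra).
  assert (Hzx : phi n x (z - x) < r) by (apply Xb; unfold z; lra).
  assert (Harr : arrow n r u0 u1).
  { split; [|split].
    - intro Eq. rewrite Eq, dP_self in Hd01. unfold z in Hd01. lra.
    - unfold u0, u1. rewrite edist_frac by auto. unfold phi in Hzx. replace (x + (z - x)) with z in Hzx by ring. auto.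
    - unfold u0, u1. rewrite !dP_frac. rewrite (frac_in (z - x)) by (unfold z; lra).
      rewrite (frac_spec (x - z) (-1) (1 - (z - x))). unfold z; lra. unfold z; lra. simpl; ring. }
  assert (Hdw : dP u0 w = y - x) by (unfold u0, w; rewrite dP_frac; apply frac_in; lra).
  destruct (Hc u0 u1 (frac_inP _) (frac_inP _) Harr w (frac_inP _)) as [_ [_ [Hlt _]]].
  - rewrite Hdw, Hd01. unfold z. lra.
  - unfold w, u1 in Hlt. rewrite edist_frac in Hlt by auto. unfold z in Hlt. unfold phi in Yp. lra.
Qed.

Definition r0 (x : R) := DD n x (x + LL l m n).

Lemma r0_pos x : 0 < r0 x.
Proof.
  unfold r0. rewrite (DD_L l m n Hl Hm Hnm). apply Rmult_lt_0_compat. apply (cc_pos l m n Hl Hm Hnm).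
  apply sqrt_lt_R0. rewrite (norm_formula l m n Hl Hm Hnm). pose proof (frac_range (INR n * x)).
  pose proof (cos_th_lt1 n Hn6). set (f := frac_part (INR n * x)) in *.
  assert (f * (1 - f) <= 1/4) by (pose proof (pow2_ge_0 (f - 1/2)); nra).
  assert (0 <= cos (th n)) by (apply cos_ge_0; pose proof (th_pos n Hn6); pose proof (th_le n Hn6); pose proof PI_RGT_0; lra).
  assert (0 <= f * (1 - f)) by nra.
  assert (f * (1 - f) * (1 - cos (th n)) <= 1/4 * 1) by (apply Rmult_le_compat; lra).
  lra.
Qed.

Lemma r0_shift x k : r0 (x + IZR k * LL l m n) = r0 x.
Proof.
  unfold r0. unfold LL. replace (IZR k * (INR (MM l m) / INR n)) with (IZR (k * Z.of_nat (MM l m)) / INR n)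
    by (rewrite mult_IZR, <- INR_IZR_INZ; field; lra).
  replace (x + IZR (k * Z.of_nat (MM l m)) / INR n + INR (MM l m) / INR n) with ((x + INR (MM l m) / INR n) + IZR (k * Z.of_nat (MM l m)) / INR n) by ring.
  apply D_shift. auto.
Qed.

Lemma r0_per x k : r0 (x + IZR k) = r0 x.
Proof. unfold r0. replace (x + IZR k + LL l m n) with ((x + LL l m n) + IZR k) by ring. apply D_per. auto. Qed.

Lemma r0_le_cc x : r0 x <= cc l m n.
Proof.
  unfold r0. rewrite (DD_L l m n Hl Hm Hnm). rewrite (norm_formula l m n Hl Hm Hnm).
  pose proof (frac_range (INR n * x)) as Hfr. pose proof (cos_th_lt1 n Hn6). set (f := frac_part (INR n * x)) in *.
  assert (sqrt (1 - 2 * f * (1 - f) * (1 - cos (th n))) <= 1).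
  { apply sqrt_le_of_sq; [lra|]. assert (0 <= f * (1 - f)) by (destruct Hfr; apply Rmult_le_pos; lra).
    assert (0 <= f * (1 - f) * (1 - cos (th n))) by (apply Rmult_le_pos; lra). lra. }
  pose proof (cc_pos l m n Hl Hm Hnm). rewrite <- (Rmult_1_r (cc l m n)) at 2. apply Rmult_le_compat_l; lra.
Qed.

Lemma r0_le_rn x : r0 x <= rn n.
Proof. pose proof (r0_le_cc x). pose proof (rn_ge_cc l m n Hl Hm Hnm). lra. Qed.

Lemma phi_L x : phi n x (LL l m n) = r0 x.
Proof. reflexivity. Qed.

Lemma phi_mono_L x s t : 0 <= s -> s < t -> t <= LL l m n -> phi n x s < phi n x t.
Proof. intros. apply (MG_L l m n Hl Hm Hnm); auto. Qed.

Lemma off0_at_r0 x : r0 x < rn n -> off0 n (r0 x) x = LL l m n.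
Proof.
  intros Hr. pose proof (r0_pos x). pose proof (LL_bounds l m n Hl Hm Hnm).
  destruct (GP (r0 x) x ltac:(lra)) as [[A1 A2] [Hp [Hb Hmin]]].
  pose proof (Hmin (LL l m n) ltac:(lra) (phi_L x)).
  destruct (Rlt_le_dec (off0 n (r0 x) x) (LL l m n)) as [E|E]; [|lra].
  exfalso. pose proof (phi_mono_L x (off0 n (r0 x) x) (LL l m n) ltac:(lra) E ltac:(lra)). rewrite phi_L in H2. lra.
Qed.

Lemma off0_lt_L x r : 0 < r -> r < r0 x -> off0 n r x < LL l m n.
Proof.
  intros H1 H2. pose proof (r0_le_rn x). pose proof (LL_bounds l m n Hl Hm Hnm).
  apply off0_lt_of; try lra. rewrite phi_L. auto.
Qed.

Lemma off0_gt_L x r : r0 x < r -> r < rn n -> LL l m n < off0 n r x.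
Proof.
  intros H1 H2. pose proof (r0_pos x). pose proof (LL_bounds l m n Hl Hm Hnm).
  apply off0_ge_of; try lra. intros s Hs. destruct (Rle_lt_or_eq_dec s (LL l m n)) as [E|E]; try lra.
  - pose proof (phi_mono_L x s (LL l m n) ltac:(lra) E ltac:(lra)). rewrite phi_L in H3. lra.
  - subst s. rewrite phi_L. lra.
Qed.

Definition Vset (x : R) := fun v => exists r, 0 < r < rn n /\ v = off0 n r x.
Definition Lx (x : R) := real (Lub_Rbar (Vset x)).

Lemma Lx_props x : (forall r, 0 < r < rn n -> off0 n r x <= Lx x) /\
   (forall eps, 0 < eps -> exists r, 0 < r < rn n /\ Lx x - eps < off0 n r x) /\ 0 < Lx x <= 1 / 2.
Proof.
  pose proof (rn_pos l m n Hl Hm Hnm) as Hrn.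
  pose proof (Lub_Rbar_correct (Vset x)) as [Hub Hlub].
  assert (Hb : Rbar_le (Lub_Rbar (Vset x)) (1/2)).
  { apply Hlub. intros v [r [Hr ->]]. simpl. destruct (GP r x Hr) as [[A1 A2] _]. auto. }
  assert (Hv : Vset x (off0 n (rn n / 2) x)) by (exists (rn n / 2); split; [lra|auto]).
  assert (Ha : Rbar_le (off0 n (rn n / 2) x) (Lub_Rbar (Vset x))) by (apply Hub; auto).
  assert (HF : Lub_Rbar (Vset x) = Finite (Lx x)).
  { unfold Lx. destruct (Lub_Rbar (Vset x)); simpl in *; try contradiction; auto. }
  rewrite HF in Hub, Hlub, Hb, Ha. simpl in Hb, Ha.
  split; [|split].
  - intros r Hr. assert (Vset x (off0 n r x)) by (exists r; auto). apply Hub in H. auto.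
  - intros eps Heps. destruct (classic (exists r, 0 < r < rn n /\ Lx x - eps < off0 n r x)) as [|Hno]; auto.
    exfalso. assert (Rbar_le (Lx x) (Lx x - eps)).
    { apply Hlub. intros v [r [Hr ->]]. simpl. destruct (Rle_dec (off0 n r x) (Lx x - eps)); auto.
      exfalso. apply Hno. exists r. split; auto. lra. }
    simpl in H. lra.
  - destruct (GP (rn n / 2) x ltac:(lra)) as [[A1 A2] _]. lra.
Qed.

Lemma off0_lim x : filterlim (fun r => off0 n r x) (at_left (rn n)) (locally (Lx x)).
Proof.
  pose proof (rn_pos l m n Hl Hm Hnm) as Hrn.
  destruct (Lx_props x) as [H1 [H2 H3]].
  apply filterlim_locally. intros eps.
  destruct (H2 eps (cond_pos eps)) as [r [Hr Hlt]].
  assert (Hd : 0 < rn n - r) by lra.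
  exists (mkposreal _ Hd). intros y Hy Hyl. simpl in Hy. unfold ball in Hy; simpl in Hy. unfold AbsRing_ball in Hy. simpl in Hy.
  unfold abs, minus, plus, opp in Hy. simpl in Hy.
  assert (Hy2 : r < y) by (apply Rabs_def2 in Hy; lra).
  assert (Hyr : 0 < y < rn n) by lra.
  pose proof (off0_mono_r r y x ltac:(lra) Hy2 Hyl). pose proof (H1 y Hyr).
  unfold ball; simpl. unfold AbsRing_ball; simpl. unfold abs, minus, plus, opp; simpl.
  apply Rabs_def1; lra.
Qed.

Lemma off_lt r x : r < rn n -> off n r x = off0 n r x.
Proof. intros H. unfold off. destruct (Rlt_dec r (rn n)); [auto| contradiction]. Qed.

Lemma off_rn x : off n (rn n) x = Lx x.
Proof.
  unfold off. destruct (Rlt_dec (rn n) (rn n)) as [E|_]; [lra|].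
  pose proof (epsilon_spec (inhabits 0) (fun L => filterlim (fun r' => off0 n r' x) (at_left (rn n)) (locally L))
     (ex_intro _ (Lx x) (off0_lim x))) as H. cbv beta in H.
  apply (@filterlim_locally_unique R R_AbsRing R_NormedModule (at_left (rn n)) (Proper_StrongProper _ (at_left_proper_filter (rn n))) (fun r' => off0 n r' x) _ _ H (off0_lim x)).
Qed.

Lemma Lx_per x k : Lx (x + IZR k) = Lx x.
Proof.
  unfold Lx, Vset. f_equal. f_equal. apply functional_extensionality. intros v.
  apply propositional_extensionality. split; intros [r [Hr Hv]]; exists r; split; auto; rewrite Hv; rewrite off0_per; auto.
Qed.

Lemma Lx_mono x y : x <= y -> x + Lx x <= y + Lx y.
Proof.
  intros Hxy. destruct (Lx_props x) as [X1 [X2 X3]]. destruct (Lx_props y) as [Y1 [Y2 Y3]].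
  destruct (Rle_dec (x + Lx x) (y + Lx y)) as [|E]; auto. exfalso. apply Rnot_le_lt in E.
  destruct (X2 (x + Lx x - (y + Lx y)) ltac:(lra)) as [r [Hr Hlt]].
  pose proof (Gmono r x y Hr Hxy). pose proof (Y1 r Hr). lra.
Qed.

Lemma Lx_ge_off0 x r : 0 < r < rn n -> off0 n r x <= Lx x.
Proof. intros. destruct (Lx_props x) as [X1 _]. auto. Qed.

Lemma Lx_at_r0 x : r0 x = rn n -> Lx x = LL l m n.
Proof.
  intros Heq. pose proof (LL_bounds l m n Hl Hm Hnm). pose proof (r0_pos x).
  destruct (Lx_props x) as [X1 [X2 X3]].
  apply Rle_antisym.
  - destruct (Rle_dec (Lx x) (LL l m n)) as [|E]; auto. exfalso. apply Rnot_le_lt in E.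
    destruct (X2 (Lx x - LL l m n) ltac:(lra)) as [r [Hr Hlt]].
    pose proof (off0_lt_L x r ltac:(lra) ltac:(lra)). lra.
  - destruct (Rle_dec (LL l m n) (Lx x)) as [|E]; auto. exfalso. apply Rnot_le_lt in E.
    set (t := Rmax (Lx x) (LL l m n / 2)).
    assert (Ht : 0 < t < LL l m n) by (unfold t; pose proof (Rmax_l (Lx x) (LL l m n / 2)); pose proof (Rmax_r (Lx x) (LL l m n / 2));
       destruct (Rmax_Rle (Lx x) (LL l m n / 2) (LL l m n)) as [_ HH']; unfold Rmax; destruct (Rle_dec (Lx x) (LL l m n / 2)); lra).
    pose proof (phi_mono_L x t (LL l m n) ltac:(lra) ltac:(lra) ltac:(lra)) as Hpt. rewrite phi_L in Hpt.
    set (r := (phi n x t + rn n) / 2).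
    assert (Hr : 0 < r < rn n) by (unfold r; pose proof (phi_nonneg n x t); lra).
    assert (t < off0 n r x).
    { apply off0_ge_of; auto; try lra. intros s Hs. destruct (Rle_lt_or_eq_dec s t) as [E2|E2]; try lra.
      - pose proof (phi_mono_L x s t ltac:(lra) E2 ltac:(lra)). unfold r. lra.
      - subst s. unfold r. lra. }
    pose proof (X1 r Hr). assert (Lx x <= t) by (unfold t; apply Rmax_l). lra.
Qed.

Lemma Lx_gt_L x : r0 x < rn n -> LL l m n < Lx x.
Proof.
  intros H. set (r := (r0 x + rn n) / 2). pose proof (r0_pos x).
  assert (Hr : 0 < r < rn n) by (unfold r; lra).
  pose proof (off0_gt_L x r ltac:(unfold r; lra) ltac:(lra)). pose proof (Lx_ge_off0 x r Hr). lra.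
Qed.

End Off2.


Section StarAn.
Variables l m n : nat.
Hypothesis Hl : (1 <= l)%nat.
Hypothesis Hm : (2 <= m)%nat.
Hypothesis Hnm : n = ((2 * l + 1) * m)%nat.

Let Hn6 : (6 <= n)%nat. Proof. subst n. nia. Qed.
Let Hn : (0 < n)%nat. Proof. lia. Qed.
Let Hn' : 0 < INR n. Proof. apply INR_n_pos; lia. Qed.

Notation LLv := (LL l m n).
Notation r0v := (r0 l m n).

Lemma off_per r x k : 0 < r <= rn n -> off n r (x + IZR k) = off n r x.
Proof.
  intros Hr. destruct (Rlt_le_dec r (rn n)) as [E|E].
  - rewrite !off_lt by auto. apply (off0_per l m n Hl Hm Hnm); auto.
  - assert (r = rn n) by lra. subst r. rewrite !(off_rn l m n Hl Hm Hnm). apply (Lx_per l m n Hl Hm Hnm).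
Qed.

Lemma off_range r x : 0 < r <= rn n -> 0 < off n r x <= 1 / 2.
Proof.
  intros Hr. destruct (Rlt_le_dec r (rn n)) as [E|E].
  - rewrite off_lt by auto. destruct (glb_props l m n Hl Hm Hnm r x ltac:(lra)) as [A _]. auto.
  - assert (r = rn n) by lra. subst r. rewrite (off_rn l m n Hl Hm Hnm). destruct (Lx_props l m n Hl Hm Hnm x) as [_ [_ A]]. auto.
Qed.

Lemma off_mono r x y : 0 < r <= rn n -> x <= y -> x + off n r x <= y + off n r y.
Proof.
  intros Hr Hxy. destruct (Rlt_le_dec r (rn n)) as [E|E].
  - rewrite !off_lt by auto. apply (Gmono l m n Hl Hm Hnm); auto; lra.
  - assert (r = rn n) by lra. subst r. rewrite !(off_rn l m n Hl Hm Hnm). apply (Lx_mono l m n Hl Hm Hnm); auto.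
Qed.

Lemma off_at_r0 x : off n (r0v x) x = LLv.
Proof.
  pose proof (r0_le_rn l m n Hl Hm Hnm x). destruct (Rlt_le_dec (r0v x) (rn n)) as [E|E].
  - rewrite off_lt by auto. apply (off0_at_r0 l m n Hl Hm Hnm); auto.
  - assert (Heq : r0v x = rn n) by lra. rewrite Heq. rewrite (off_rn l m n Hl Hm Hnm). apply (Lx_at_r0 l m n Hl Hm Hnm); auto.
Qed.

Lemma off_gt r x : r0v x < r <= rn n -> LLv < off n r x.
Proof.
  intros Hr. destruct (Rlt_le_dec r (rn n)) as [E|E].
  - rewrite off_lt by auto. apply (off0_gt_L l m n Hl Hm Hnm); tauto.
  - assert (r = rn n) by lra. subst r. rewrite (off_rn l m n Hl Hm Hnm). apply (Lx_gt_L l m n Hl Hm Hnm); tauto.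
Qed.

Lemma off_lt_L r x : 0 < r < r0v x -> off n r x < LLv.
Proof.
  intros Hr. pose proof (r0_le_rn l m n Hl Hm Hnm x). rewrite off_lt by lra. apply (off0_lt_L l m n Hl Hm Hnm); tauto.
Qed.

Lemma r0_lift x i k : r0v (x + INR i * LLv + IZR k) = r0v x.
Proof. rewrite (r0_per l m n Hl Hm Hnm) by auto. rewrite INR_IZR_INZ. apply (r0_shift l m n Hl Hm Hnm); auto. Qed.

Lemma LL_times : INR (S (2 * l)) * LLv = INR l.
Proof. rewrite (LL_eq l m n Hl Hm Hnm). rewrite S_INR, mult_INR. simpl. pose proof (pos_INR l). field. lra. Qed.

Definition ustar (p : R) (i : nat) := frac_part (p + INR i * LLv).

Lemma ustar_step p i : g n (r0v p) (ustar p i) = ustar p (S i).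
Proof.
  unfold g, ustar. destruct (frac_int_diff (p + INR i * LLv)) as [k Hk].
  assert (E : frac_part (p + INR i * LLv) = p + INR i * LLv + IZR (- k)) by (rewrite opp_IZR; lra).
  rewrite E. rewrite off_per.
  - replace (r0v p) with (r0v (p + INR i * LLv)) at 1 by (rewrite <- (Rplus_0_r (p + INR i * LLv)); replace 0 with (IZR 0) by auto; apply r0_lift).
    rewrite off_at_r0. rewrite S_INR. replace (p + INR i * LLv + IZR (- k) + LLv) with (p + (INR i + 1) * LLv + IZR (- k)) by ring.
    apply frac_add_int.
  - split. apply (r0_pos l m n Hl Hm Hnm). apply r0_le_rn; auto.
Qed.

Lemma star_exists p : inP p -> star_side n l (r0v p) p.
Proof.
  intros Hp. split. split. apply (r0_pos l m n Hl Hm Hnm). apply r0_le_rn; auto.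
  exists (ustar p). split; [|split; [|split]].
  - unfold ustar. simpl. rewrite Rmult_0_l, Rplus_0_r. apply frac_in. auto.
  - intros i Hi. symmetry. apply ustar_step.
  - unfold ustar. replace (2 * l + 1)%nat with (S (2 * l)) by lia. rewrite LL_times.
    rewrite INR_IZR_INZ. rewrite frac_add_int. simpl. rewrite Rmult_0_l, Rplus_0_r. auto.
  - rewrite (sum_eq _ (fun _ => LLv)).
    + rewrite sum_cte. rewrite Rmult_comm. apply LL_times.
    + intros i Hi. unfold ustar. rewrite dP_frac. rewrite S_INR.
      replace (p + (INR i + 1) * LLv - (p + INR i * LLv)) with LLv by ring.
      apply frac_in. pose proof (LL_bounds l m n Hl Hm Hnm). lra.
Qed.

Fixpoint Ulift (r p : R) (i : nat) : R :=
  match i with O => p | S j => Ulift r p j + off n r (Ulift r p j) end.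



Lemma star_lift_frac r p u : 0 < r <= rn n -> inP p -> u 0%nat = p -> is_star n l r u ->
  forall i, (i <= 2 * l + 1)%nat -> u i = frac_part (Ulift r p i).
Proof.
  intros Hr Hp Hu0 [Hs _]. induction i as [|i IH]; intros Hi.
  - simpl. rewrite Hu0. symmetry. apply frac_in. auto.
  - rewrite Hs by lia. rewrite IH by lia. unfold g. simpl.
    destruct (frac_int_diff (Ulift r p i)) as [k Hk].
    assert (E : frac_part (Ulift r p i) = Ulift r p i + IZR (- k)) by (rewrite opp_IZR; lra).
    rewrite E, off_per by auto.
    replace (Ulift r p i + IZR (- k) + off n r (Ulift r p i)) with ((Ulift r p i + off n r (Ulift r p i)) + IZR (- k)) by ring.
    apply frac_add_int.
Qed.

Lemma star_dP r p u : 0 < r <= rn n -> inP p -> u 0%nat = p -> is_star n l r u ->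
  forall i, (i < 2 * l + 1)%nat -> dP (u i) (u (S i)) = off n r (Ulift r p i).
Proof.
  intros Hr Hp Hu0 Hst i Hi.
  rewrite !(star_lift_frac r p u Hr Hp Hu0 Hst) by lia. rewrite dP_frac. simpl.
  replace (Ulift r p i + off n r (Ulift r p i) - Ulift r p i) with (off n r (Ulift r p i)) by ring.
  apply frac_in. pose proof (off_range r (Ulift r p i) Hr). lra.
Qed.

Lemma Ulift_sum r p N : Ulift r p (S N) = p + sum_f_R0 (fun j => off n r (Ulift r p j)) N.
Proof.
  induction N as [|N IH].
  - simpl. ring.
  - change (Ulift r p (S (S N))) with (Ulift r p (S N) + off n r (Ulift r p (S N))).
    change (sum_f_R0 (fun j => off n r (Ulift r p j)) (S N)) with (sum_f_R0 (fun j => off n r (Ulift r p j)) N + off n r (Ulift r p (S N))).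
    rewrite <- Rplus_assoc, <- IH. reflexivity.
Qed.

Lemma star_end r p u : 0 < r <= rn n -> inP p -> u 0%nat = p -> is_star n l r u ->
  Ulift r p (S (2 * l)) = p + INR l.
Proof.
  intros Hr Hp Hu0 Hst. rewrite Ulift_sum. f_equal.
  destruct Hst as [A [B C]]. rewrite <- C. apply sum_eq. intros i Hi.
  symmetry. apply (star_dP r p u Hr Hp Hu0 (conj A (conj B C))). lia.
Qed.

Lemma star_unique r p : inP p -> star_side n l r p -> r = r0v p.
Proof.
  intros Hp [Hr [u [Hu0 Hst]]].
  pose proof (star_end r p u Hr Hp Hu0 Hst) as Hend.
  set (V := fun i : nat => p + INR i * LLv).
  assert (HrV : forall i, r0v (V i) = r0v p).
  { intros i. unfold V. rewrite <- (Rplus_0_r (p + INR i * LLv)). replace 0 with (IZR 0) by auto. apply r0_lift. }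
  assert (HV : V (S (2 * l)) = p + INR l) by (unfold V; rewrite LL_times; auto).
  destruct (Rtotal_order r (r0v p)) as [E|[E|E]]; auto; exfalso.
  - assert (Hle : forall i, Ulift r p i <= V i).
    { induction i as [|i IH]. unfold V; simpl; lra.
      simpl. pose proof (off_mono r (Ulift r p i) (V i) Hr IH).
      pose proof (off_lt_L r (V i) ltac:(rewrite HrV; lra)).
      unfold V in *. rewrite S_INR. lra. }
    assert (Ulift r p (S (2 * l)) < V (S (2 * l))).
    { cbn [Ulift]. pose proof (off_mono r (Ulift r p (2 * l)%nat) (V (2 * l)%nat) Hr (Hle _)).
      pose proof (off_lt_L r (V (2 * l)%nat) ltac:(rewrite HrV; lra)).
      unfold V in *. rewrite S_INR. lra. }
    lra.
  - assert (Hge : forall i, V i <= Ulift r p i).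
    { induction i as [|i IH]. unfold V; simpl; lra.
      simpl. pose proof (off_mono r (V i) (Ulift r p i) Hr IH).
      pose proof (off_gt r (V i) ltac:(rewrite HrV; lra)).
      unfold V in *. rewrite S_INR. lra. }
    assert (V (S (2 * l)) < Ulift r p (S (2 * l))).
    { cbn [Ulift]. pose proof (off_mono r (V (2 * l)%nat) (Ulift r p (2 * l)%nat) Hr (Hge _)).
      pose proof (off_gt r (V (2 * l)%nat) ltac:(rewrite HrV; lra)).
      unfold V in *. rewrite S_INR. lra. }
    lra.
Qed.

Lemma s_eq p : inP p -> s n l p = r0v p.
Proof.
  intros Hp. unfold s.
  pose proof (epsilon_spec (inhabits 0) (fun r => star_side n l r p) (ex_intro _ (r0v p) (star_exists p Hp))) as H.
  cbv beta in H. apply star_unique; auto.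
Qed.

Lemma star_det p u : inP p -> u 0%nat = p -> is_star n l (r0v p) u ->
  forall i, (i <= 2 * l + 1)%nat -> u i = ustar p i.
Proof.
  intros Hp Hu0 [Hs _]. induction i as [|i IH]; intros Hi.
  - unfold ustar. simpl. rewrite Rmult_0_l, Rplus_0_r, Hu0. symmetry. apply frac_in; auto.
  - rewrite Hs by lia. rewrite IH by lia. apply ustar_step.
Qed.

Lemma ustar_lift p i : exists k, ustar p i = p + INR i * LLv + IZR k.
Proof. unfold ustar. destruct (frac_int_diff (p + INR i * LLv)) as [k Hk]. exists (- k)%Z. rewrite opp_IZR. lra. Qed.

Lemma nLL : INR n * LLv = INR (MM l m).
Proof. unfold LL. field. lra. Qed.

Lemma vcross_iff p : inP p -> (vcross n l p <-> exists k, INR n * p = IZR k).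
Proof.
  intros Hp. split.
  - intros [u [Hu0 [Hst [i [k [Hi Hk]]]]]]. rewrite s_eq in Hst by auto.
    rewrite (star_det p u Hp Hu0 Hst i ltac:(lia)) in Hk.
    destruct (ustar_lift p i) as [k' Hk']. rewrite Hk' in Hk.
    exists (k - Z.of_nat (i * MM l m) - Z.of_nat n * k')%Z.
    rewrite !minus_IZR, mult_IZR, <- !INR_IZR_INZ, mult_INR.
    assert (INR n * (p + INR i * LLv + IZR k') = IZR k) by (rewrite Hk; field; lra).
    rewrite <- nLL. nra.
  - intros [k Hk]. exists (ustar p). split; [|split].
    + unfold ustar. simpl. rewrite Rmult_0_l, Rplus_0_r. apply frac_in; auto.
    + rewrite s_eq by auto. destruct (star_exists p Hp) as [_ [u [Hu0 Hst]]].
      split; [|split].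
      * intros i Hi. symmetry. apply ustar_step.
      * destruct Hst as [A [B C]]. rewrite <- !(star_det p u Hp Hu0 (conj A (conj B C))) by lia. auto.
      * destruct Hst as [A [B C]]. rewrite <- C. apply sum_eq. intros i Hi.
        rewrite !(star_det p u Hp Hu0 (conj A (conj B C))) by lia. auto.
    + exists 0%nat, k. split. lia. unfold ustar. simpl. rewrite Rmult_0_l, Rplus_0_r, frac_in by auto.
      rewrite <- Hk. field. lra.
Qed.

Lemma mcross_iff p : inP p -> (mcross n l p <-> exists k, INR n * p = IZR k + / 2).
Proof.
  intros Hp. split.
  - intros [u [Hu0 [Hst [i [k [Hi Hk]]]]]]. rewrite s_eq in Hst by auto.
    rewrite (star_det p u Hp Hu0 Hst i ltac:(lia)) in Hk.
    destruct (ustar_lift p i) as [k' Hk']. rewrite Hk' in Hk.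
    exists (k - Z.of_nat (i * MM l m) - Z.of_nat n * k')%Z.
    rewrite !minus_IZR, mult_IZR, <- !INR_IZR_INZ, mult_INR.
    assert (INR n * (p + INR i * LLv + IZR k') = IZR k + / 2) by (rewrite Hk; field; lra).
    rewrite <- nLL. nra.
  - intros [k Hk]. exists (ustar p). split; [|split].
    + unfold ustar. simpl. rewrite Rmult_0_l, Rplus_0_r. apply frac_in; auto.
    + rewrite s_eq by auto. destruct (star_exists p Hp) as [_ [u [Hu0 Hst]]].
      split; [|split].
      * intros i Hi. symmetry. apply ustar_step.
      * destruct Hst as [A [B C]]. rewrite <- !(star_det p u Hp Hu0 (conj A (conj B C))) by lia. auto.
      * destruct Hst as [A [B C]]. rewrite <- C. apply sum_eq. intros i Hi.
        rewrite !(star_det p u Hp Hu0 (conj A (conj B C))) by lia. auto.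
    + exists 0%nat, k. split. lia. unfold ustar. simpl. rewrite Rmult_0_l, Rplus_0_r, frac_in by auto.
      rewrite <- Hk. field. lra.
Qed.

End StarAn.


Definition psi (n : nat) (p : R) := frac_part (INR n * p) * (1 - frac_part (INR n * p)).

Lemma half_not_int k1 k2 : IZR k1 <> IZR k2 + / 2.
Proof.
  intros H. assert (E : IZR (2 * (k1 - k2)) = IZR 1) by (rewrite mult_IZR, minus_IZR; simpl; lra).
  apply eq_IZR in E. lia.
Qed.

Lemma frac_int_plus K t : 0 <= t < 1 -> frac_part (IZR K + t) = t.
Proof. intros Ht. apply (frac_spec _ K); auto. Qed.

Lemma psi_half_val K t : 0 <= t <= 1 / 2 ->
  frac_part (IZR K + / 2 + t) * (1 - frac_part (IZR K + / 2 + t)) = 1 / 4 - t ^ 2.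
Proof.
  intros Ht. destruct (Rlt_le_dec t (1/2)) as [E|E].
  - rewrite (frac_spec _ K (/ 2 + t)) by (lra || ring). field.
  - assert (t = 1/2) by lra. subst t. rewrite (frac_spec _ (K + 1) 0) by (try lra; rewrite plus_IZR; simpl; field).
    field.
Qed.

Section Main.
Variables l m n : nat.
Hypothesis Hl : (1 <= l)%nat.
Hypothesis Hm : (2 <= m)%nat.
Hypothesis Hnm : n = ((2 * l + 1) * m)%nat.

Let Hn6 : (6 <= n)%nat. Proof. subst n. nia. Qed.
Let Hn : (0 < n)%nat. Proof. lia. Qed.
Let Hn' : 0 < INR n. Proof. apply INR_n_pos; lia. Qed.

Lemma s_formula p : inP p -> s n l p = cc l m n * sqrt (1 - 2 * psi n p * (1 - cos (th n))).
Proof.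
  intros Hp. rewrite (s_eq l m n Hl Hm Hnm) by auto. unfold r0. rewrite (DD_L l m n Hl Hm Hnm).
  rewrite (norm_formula l m n Hl Hm Hnm). unfold psi. f_equal. f_equal. ring.
Qed.

Lemma psi_bounds p : 0 <= psi n p <= 1 / 4.
Proof. unfold psi. pose proof (frac_range (INR n * p)). pose proof (pow2_ge_0 (frac_part (INR n * p) - 1/2)). split; nra. Qed.

Lemma s_lt p q : inP p -> inP q -> psi n q < psi n p -> s n l p < s n l q.
Proof.
  intros Hp Hq H. rewrite !s_formula by auto. apply Rmult_lt_compat_l. apply (cc_pos l m n Hl Hm Hnm).
  pose proof (cos_th_lt1 n Hn6). pose proof (psi_bounds p). pose proof (psi_bounds q).
  assert (0 <= cos (th n)) by (apply cos_ge_0; pose proof (th_pos n Hn6); pose proof (th_le n Hn6); pose proof PI_RGT_0; lra).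
  apply sqrt_lt_1_alt. split.
  - assert (psi n p * (1 - cos (th n)) <= 1/4 * 1) by (apply Rmult_le_compat; lra). lra.
  - assert (psi n q * (1 - cos (th n)) < psi n p * (1 - cos (th n))) by (apply Rmult_lt_compat_r; lra). lra.
Qed.

Lemma s_le p q : inP p -> inP q -> psi n q <= psi n p -> s n l p <= s n l q.
Proof.
  intros Hp Hq H. destruct H as [H|H]. apply Rlt_le, s_lt; auto.
  rewrite !s_formula by auto. rewrite H. lra.
Qed.

Lemma n_dP a b : exists k : Z, INR n * dP a b = INR n * b - INR n * a + IZR k * INR n.
Proof. destruct (dP_lift a b) as [k Hk]. exists (- k)%Z. rewrite opp_IZR. rewrite Hk at 2. ring. Qed.

Lemma dP_ge_inv a b z : 0 < dP a b -> INR n * dP a b = IZR z -> / INR n <= dP a b.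
Proof.
  intros H1 H2. assert (0 < IZR z) by (rewrite <- H2; apply Rmult_lt_0_compat; lra).
  apply lt_IZR in H. assert (1 <= IZR z) by (apply IZR_le; lia).
  apply Rmult_le_reg_l with (INR n); auto. rewrite Rinv_r by lra. lra.
Qed.

Lemma shift_half p : inP p -> exists k : Z, INR n * frac_part (p + / (2 * INR n)) = INR n * p + / 2 + IZR k * INR n.
Proof.
  intros Hp. destruct (frac_int_diff (p + / (2 * INR n))) as [k Hk]. exists (- k)%Z. rewrite opp_IZR.
  replace (frac_part (p + / (2 * INR n))) with (p + / (2 * INR n) - IZR k) by lra. field. lra.
Qed.

Lemma dP_shift_half p : inP p -> dP p (frac_part (p + / (2 * INR n))) = / (2 * INR n).
Proof.
  intros Hp. destruct (frac_int_diff (p + / (2 * INR n))) as [k Hk]. unfold dP.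
  apply (frac_spec _ (- k)). split. apply Rlt_le, Rinv_0_lt_compat; lra.
  apply Rlt_trans with (/ 6). apply Rinv_lt_contravar. assert (6 <= INR n) by (replace 6 with (INR 6) by (simpl; ring); apply le_INR; auto). nra.
  assert (6 <= INR n) by (replace 6 with (INR 6) by (simpl; ring); apply le_INR; auto). lra. lra.
  rewrite opp_IZR. lra.
Qed.

End Main.


Theorem lemma5p11 (l n : nat) :
  (1 <= l)%nat -> (4 * l + 2 <= n)%nat -> Nat.divide (2 * l + 1) n ->
  (* midpoint crossings are global minima of s_{2l+1} *)
  (forall p, inP p -> mcross n l p -> forall q, inP q -> s n l p <= s n l q) /\
  (* vertex crossings are global maxima of s_{2l+1} *)
  (forall p, inP p -> vcross n l p -> forall q, inP q -> s n l q <= s n l p) /\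
  (* crossings alternate between vertex and midpoint crossings *)
  ((forall p, inP p -> ~ (vcross n l p /\ mcross n l p)) /\
   (forall p q, inP p -> inP q -> vcross n l p -> vcross n l q -> p <> q ->
      exists m, inP m /\ mcross n l m /\ 0 < dP p m < dP p q) /\
   (forall p q, inP p -> inP q -> mcross n l p -> mcross n l q -> p <> q ->
      exists v, inP v /\ vcross n l v /\ 0 < dP p v < dP p q)) /\
  (* strict monotonicity between adjacent midpoint and vertex crossings *)
  (forall a b, inP a -> inP b ->
     ((mcross n l a /\ vcross n l b) \/ (vcross n l a /\ mcross n l b)) ->
     (forall x, inP x -> 0 < dP a x < dP a b -> ~ crossing n l x) ->
     (forall x y, inP x -> inP y -> dP a x < dP a y -> dP a y <= dP a b ->
        s n l x < s n l y) \/
     (forall x y, inP x -> inP y -> dP a x < dP a y -> dP a y <= dP a b ->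
        s n l y < s n l x)).
Proof.
  intros Hl Hn4 [m Hmn].
  assert (Hm : (2 <= m)%nat) by nia.
  assert (Hnm : n = ((2 * l + 1) * m)%nat) by lia.
  assert (Hn6 : (6 <= n)%nat) by nia.
  assert (Hn' : 0 < INR n) by (apply INR_n_pos; lia).
  assert (Hn6' : 6 <= INR n) by (replace 6 with (INR 6) by (simpl; ring); apply le_INR; auto).
  pose proof (vcross_iff l m n Hl Hm Hnm) as VI. pose proof (mcross_iff l m n Hl Hm Hnm) as MI.
  assert (Hhalf : 0 < / (2 * INR n) < / INR n).
  { split. apply Rinv_0_lt_compat; lra. apply Rinv_lt_contravar; nra. }
  assert (PSI_V : forall p, inP p -> vcross n l p -> psi n p = 0).
  { intros p Hp Hv. apply VI in Hv; auto. destruct Hv as [k Hk]. unfold psi. rewrite Hk.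
    rewrite (frac_spec _ k 0) by (lra || ring). ring. }
  assert (PSI_M : forall p, inP p -> mcross n l p -> psi n p = 1 / 4).
  { intros p Hp Hv. apply MI in Hv; auto. destruct Hv as [k Hk]. unfold psi. rewrite Hk.
    rewrite (frac_spec _ k (/ 2)) by (lra || ring). field. }
  split; [|split; [|split]].
  - intros p Hp Hmc q Hq. apply (s_le l m n Hl Hm Hnm); auto.
    rewrite (PSI_M p Hp Hmc). pose proof (psi_bounds n q). lra.
  - intros p Hp Hvc q Hq. apply (s_le l m n Hl Hm Hnm); auto.
    rewrite (PSI_V p Hp Hvc). pose proof (psi_bounds n q). lra.
  - split; [|split].
    + intros p Hp [Hv Hmc]. apply VI in Hv; auto. apply MI in Hmc; auto.
      destruct Hv as [k1 H1]. destruct Hmc as [k2 H2]. apply (half_not_int k1 k2). lra.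
    + intros p q Hp Hq Hvp Hvq Hpq. apply VI in Hvp; auto. apply VI in Hvq; auto.
      destruct Hvp as [kp Hkp]. destruct Hvq as [kq Hkq].
      exists (frac_part (p + / (2 * INR n))). split; [apply frac_inP|split].
      * apply MI. apply frac_inP. destruct (shift_half l m n Hl Hm Hnm p Hp) as [k Hk].
        exists (kp + k * Z.of_nat n)%Z. rewrite Hk, plus_IZR, mult_IZR, <- INR_IZR_INZ. lra.
      * rewrite (dP_shift_half l m n Hl Hm Hnm p Hp). split. lra.
        assert (Hd0 : 0 < dP p q).
        { pose proof (dP_range p q) as [R1 _]. destruct R1 as [R1|R1]; auto.
          exfalso. apply Hpq. apply dP_zero; auto. }
        destruct (n_dP n p q) as [k Hk].
        assert (INR n * dP p q = IZR (kq - kp + k * Z.of_nat n)) by (rewrite Hk, plus_IZR, minus_IZR, mult_IZR, <- INR_IZR_INZ; lra).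
        pose proof (dP_ge_inv l m n Hl Hm Hnm p q _ Hd0 H). lra.
    + intros p q Hp Hq Hvp Hvq Hpq. apply MI in Hvp; auto. apply MI in Hvq; auto.
      destruct Hvp as [kp Hkp]. destruct Hvq as [kq Hkq].
      exists (frac_part (p + / (2 * INR n))). split; [apply frac_inP|split].
      * apply VI. apply frac_inP. destruct (shift_half l m n Hl Hm Hnm p Hp) as [k Hk].
        exists (kp + 1 + k * Z.of_nat n)%Z. rewrite Hk, !plus_IZR, mult_IZR, <- INR_IZR_INZ. simpl. lra.
      * rewrite (dP_shift_half l m n Hl Hm Hnm p Hp). split. lra.
        assert (Hd0 : 0 < dP p q).
        { pose proof (dP_range p q) as [R1 _]. destruct R1 as [R1|R1]; auto.
          exfalso. apply Hpq. apply dP_zero; auto. }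
        destruct (n_dP n p q) as [k Hk].
        assert (INR n * dP p q = IZR (kq - kp + k * Z.of_nat n)) by (rewrite Hk, plus_IZR, minus_IZR, mult_IZR, <- INR_IZR_INZ; lra).
        pose proof (dP_ge_inv l m n Hl Hm Hnm p q _ Hd0 H). lra.
  - intros a b Ha Hb Htypes Hnone.
    assert (Hj : exists j : Z, INR n * dP a b = IZR j + / 2).
    { destruct (n_dP n a b) as [k Hk].
      destruct Htypes as [[Hma Hvb]|[Hva Hmb]].
      - apply MI in Hma; auto. apply VI in Hvb; auto. destruct Hma as [ka Hka]. destruct Hvb as [kb Hkb].
        exists (kb - ka - 1 + k * Z.of_nat n)%Z. rewrite Hk, !plus_IZR, !minus_IZR, mult_IZR, <- INR_IZR_INZ. simpl. lra.
      - apply VI in Hva; auto. apply MI in Hmb; auto. destruct Hva as [ka Hka]. destruct Hmb as [kb Hkb].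
        exists (kb - ka + k * Z.of_nat n)%Z. rewrite Hk, !plus_IZR, !minus_IZR, mult_IZR, <- INR_IZR_INZ. lra. }
    destruct Hj as [j Hj].
    assert (Hj0 : (0 <= j)%Z).
    { pose proof (dP_range a b) as [R1 _]. assert (-1 < IZR j) by nra. apply lt_IZR in H. lia. }
    assert (Hj1 : j = 0%Z).
    { destruct (Z.eq_dec j 0) as [|Hne]; auto. exfalso.
      assert (1 <= IZR j) by (apply IZR_le; lia).
      set (x0 := frac_part (a + / (2 * INR n))).
      apply (Hnone x0). apply frac_inP.
      - unfold x0. rewrite (dP_shift_half l m n Hl Hm Hnm a Ha). split. lra.
        apply Rmult_lt_reg_l with (INR n); auto. rewrite Hj.
        replace (INR n * / (2 * INR n)) with (/ 2) by (field; lra). lra.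
      - destruct (shift_half l m n Hl Hm Hnm a Ha) as [k Hk]. fold x0 in Hk.
        destruct Htypes as [[Hma _]|[Hva _]].
        + left. apply VI. apply frac_inP. apply MI in Hma; auto. destruct Hma as [ka Hka].
          exists (ka + 1 + k * Z.of_nat n)%Z. rewrite Hk, !plus_IZR, mult_IZR, <- INR_IZR_INZ. simpl. lra.
        + right. apply MI. apply frac_inP. apply VI in Hva; auto. destruct Hva as [ka Hka].
          exists (ka + k * Z.of_nat n)%Z. rewrite Hk, !plus_IZR, mult_IZR, <- INR_IZR_INZ. lra. }
    subst j. simpl in Hj. rewrite Rplus_0_l in Hj.
    assert (Tpos : forall x, inP x -> dP a x <= dP a b -> 0 <= INR n * dP a x <= / 2).
    { intros x Hx Hxb. pose proof (dP_range a x). split. nra. rewrite <- Hj. apply Rmult_le_compat_l; lra. }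
    assert (NX : forall x, exists k : Z, INR n * x = INR n * a + INR n * dP a x + IZR k).
    { intros x. destruct (n_dP n a x) as [k Hk]. exists (- (k * Z.of_nat n))%Z.
      rewrite opp_IZR, mult_IZR, <- INR_IZR_INZ. lra. }
    destruct Htypes as [[Hma _]|[Hva _]].
    + left. intros x y Hx Hy Hxy Hyb. apply (s_lt l m n Hl Hm Hnm); auto.
      apply MI in Hma; auto. destruct Hma as [ka Hka].
      pose proof (Tpos x Hx ltac:(lra)) as Tx. pose proof (Tpos y Hy Hyb) as Ty.
      destruct (NX x) as [kx Hkx]. destruct (NX y) as [ky Hky].
      unfold psi. rewrite Hkx, Hky, Hka.
      replace (IZR ka + / 2 + INR n * dP a x + IZR kx) with (IZR (ka + kx) + / 2 + INR n * dP a x) by (rewrite plus_IZR; ring).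
      replace (IZR ka + / 2 + INR n * dP a y + IZR ky) with (IZR (ka + ky) + / 2 + INR n * dP a y) by (rewrite plus_IZR; ring).
      rewrite !psi_half_val by lra.
      assert (INR n * dP a x < INR n * dP a y) by (apply Rmult_lt_compat_l; auto). nra.
    + right. intros x y Hx Hy Hxy Hyb. apply (s_lt l m n Hl Hm Hnm); auto.
      apply VI in Hva; auto. destruct Hva as [ka Hka].
      pose proof (Tpos x Hx ltac:(lra)) as Tx. pose proof (Tpos y Hy Hyb) as Ty.
      destruct (NX x) as [kx Hkx]. destruct (NX y) as [ky Hky].
      unfold psi. rewrite Hkx, Hky, Hka.
      replace (IZR ka + INR n * dP a x + IZR kx) with (IZR (ka + kx) + INR n * dP a x) by (rewrite plus_IZR; ring).
      replace (IZR ka + INR n * dP a y + IZR ky) with (IZR (ka + ky) + INR n * dP a y) by (rewrite plus_IZR; ring).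
      rewrite !frac_int_plus by lra.
      assert (INR n * dP a x < INR n * dP a y) by (apply Rmult_lt_compat_l; auto). nra.
Qed.
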